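(* Let $\gamma:S^1\to\mathbb{R}_{>0}$, $\gamma(e^{i\theta})=\cos^6\theta+\sin^6\theta$, and write $\xi_\gamma(\theta)=\xi_\gamma(e^{i\theta})$; for a set $I\subset\mathbb{R}$ write $\xi_\gamma(I)=\{\xi_\gamma(\theta):\theta\in I\}$. (i) $\xi_\gamma(e^{i\theta})=(\cos\theta(\cos^6\theta+6\cos^4\theta\sin^2\theta-5\sin^6\theta),\ \sin\theta(-5\cos^6\theta+6\cos^4\theta\sin^2\theta+\sin^6\theta))$. (ii) $W_\gamma=\xi_\gamma\big([\rho_1,\rho_2]\cup[\rho_1+\pi/2,\rho_2+\pi/2]\cup[\rho_1+\pi,\rho_2+\pi]\cup[\rho_1+3\pi/2,\rho_2+3\pi/2]\big)$. (iii) Each of the following closed curves contained in $\xi_\gamma(S^1)$ is a closed piecewise-$C^\infty$ CAMC curve for $\gamma$, with anisotropic curvature $-1$ with respect to the outward-pointing normal: $(C_\gamma)_1=\xi_\gamma([\theta_2,\theta_3]\cup[\theta_4,\theta_5]\cup[\theta_6,\theta_7]\cup[\theta_8,\theta_1])$; $(C_\gamma)_2=\xi_\gamma([\theta_1,\theta_2]\cup[\theta_5,\theta_6])$; $(C_\gamma)_3=\xi_\gamma([\theta_8,\theta_1]\cup[\theta_3,\rho_2+\pi/2]\cup[\rho_1+\pi,\theta_6])$; $(C_\gamma)_4=\xi_\gamma([\theta_1,\rho_1]\cup[\rho_2,\theta_2]\cup[\theta_3,\rho_1+\pi/2]\cup[\rho_2+\pi/2,\theta_4]\cup[\theta_5,\rho_1+\pi]\cup[\rho_2+\pi,\theta_6]\cup[\theta_7,\rho_1+3\pi/2]\cup[\rho_2+3\pi/2,\theta_8+2\pi])$.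 (iv) The closed piecewise-$C^\infty$ curve $(C_\gamma)_5=\xi_\gamma([-\rho_1,\rho_1])$ is not CAMC: with respect to the outward-pointing normal its anisotropic curvature is $-1$ at each point of $\xi_\gamma([\theta_8,\theta_1])$ and $+1$ at each point of $\xi_\gamma([-\rho_1,\theta_8]\cup[\theta_1,\rho_1])$ (regular points).
   Context: $\mathbb{R}^2\cong\mathbb{C}$. Cahn–Hoffman map: $\xi_\gamma(\nu)=D\gamma|_\nu+\gamma(\nu)\nu$. Wulff shape $W_\gamma$: boundary of $\bigcap_{\nu\in S^1}\{X:\langle X,\nu\rangle\le\gamma(\nu)\}$. Constants: $\theta_1\in(0,\pi/2)$ with $\cos\theta_1=\frac{\sqrt5+1}{2\sqrt3}$; $\theta_2=\pi/2-\theta_1$, $\theta_3=\pi/2+\theta_1$, $\theta_4=\pi-\theta_1$, $\theta_5=\pi+\theta_1$, $\theta_6=3\pi/2-\theta_1$, $\theta_7=3\pi/2+\theta_1$, $\theta_8=-\theta_1$ (the parameters of the singular points of $\xi_\gamma$); $\rho_1,\rho_2\in(0,\pi/2)$ with $\cos\rho_1=\sqrt{(1+\sqrt5)/6}$, $\cos\rho_2=\sqrt{(5-\sqrt5)/6}$. A closed piecewise-$C^\infty$ curve here is the image of a piecewise-$C^\infty$ weak immersion of $S^1$ (a continuous map, decomposed into arcs on each of which it is smooth and immersive in the interior with unit normal extending continuously to the arc endpoints). For such a curve with unit normal $\nu$, the Cahn–Hoffman field is $\tilde\xi=\xi_\gamma\circ\nu$, and at regular points the anisotropic curvature is $\Lambda=-\operatorname{trace}(d\tilde\xi)$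 (relative to $dX$). The curve is CAMC if $\Lambda$ is constant at regular points and at each junction point $\zeta$ of two arcs $i,j$ one has $\tilde\xi_i(\zeta)-\tilde\xi_j(\zeta)\in T_\zeta(\text{junction})=\{0\}$, i.e. the Cahn–Hoffman fields agree. *)

(* Defs.v *)
From Stdlib Require Export Reals Lra List ClassicalEpsilon.
Export ListNotations.
Open Scope R_scope.

Definition pt := (R * R)%type.
Definition padd (u v : pt) : pt := (fst u + fst v, snd u + snd v).
Definition pscal (c : R) (u : pt) : pt := (c * fst u, c * snd u).
Definition dot (u v : pt) : R := fst u * fst v + snd u * snd v.
Definition pnorm (u : pt) : R := sqrt (dot u u).
Definition pdist (u v : pt) : R := pnorm (padd u (pscal (-1) v)).
Definition unit_vec (u : pt) : Prop := dot u u = 1.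
Definition rot_ccw (u : pt) : pt := (- snd u, fst u).
Definition rot_cw (u : pt) : pt := (snd u, - fst u).

(** * Derivatives (the derivative, whenever it exists; chosen by epsilon) *)
Definition deriv (f : R -> R) (t : R) : R :=
  epsilon (inhabits 0) (fun l => derivable_pt_lim f t l).
Definition dvec (f : R -> pt) (t : R) : pt :=
  (deriv (fun s => fst (f s)) t, deriv (fun s => snd (f s)) t).

(** * Cahn--Hoffman map of an anisotropy g : S^1 -> R_{>0}
    xi_g(nu) = Dg|_nu + g(nu) nu, where Dg|_nu is the (tangential) gradient
    of g on S^1 at nu: the derivative of g along the unit-speed great circle
    s |-> cos s nu + sin s J nu at s = 0, times the unit tangent J nu. *)
Definition grad_S1 (g : pt -> R) (nu : pt) : pt :=
  pscal (deriv (fun s => g (padd (pscal (cos s) nu) (pscal (sin s) (rot_ccw nu)))) 0)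
        (rot_ccw nu).
Definition CH (g : pt -> R) (nu : pt) : pt := padd (grad_S1 g nu) (pscal (g nu) nu).
Definition CHang (g : pt -> R) (theta : R) : pt := CH g (cos theta, sin theta).

Definition Wulff_body (g : pt -> R) (X : pt) : Prop :=
  forall nu : pt, unit_vec nu -> dot X nu <= g nu.
Definition boundary (S : pt -> Prop) (X : pt) : Prop :=
  forall eps, 0 < eps ->
    (exists Y, S Y /\ pdist X Y < eps) /\ (exists Y, ~ S Y /\ pdist X Y < eps).
Definition Wulff_shape (g : pt -> R) (X : pt) : Prop := boundary (Wulff_body g) X.

(** * Closed piecewise-C^infty curves, as cyclic lists of arcs.
    An arc (f, a, b) is the map f restricted to [a, b]; the closed curve is the
    concatenation of its arcs in list order (end of arc i = start of arc i+1,
    cyclically), i.e. a continuous map of S^1. *)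
Definition arc := ((R -> pt) * R * R)%type.
Definition afun (c : arc) : R -> pt := fst (fst c).
Definition alo (c : arc) : R := snd (fst c).
Definition ahi (c : arc) : R := snd c.

Definition smooth_on (f : R -> R) (a b : R) : Prop :=
  exists D : nat -> R -> R,
    (forall t, a < t < b -> D 0%nat t = f t) /\
    (forall n t, a < t < b -> derivable_pt_lim (D n) t (D (S n) t)).

Definition continuous_on_closed (f : R -> pt) (a b : R) : Prop :=
  forall t, a <= t <= b -> forall eps, 0 < eps -> exists delta, 0 < delta /\
    forall s, a <= s <= b -> Rabs (s - t) < delta -> pdist (f s) (f t) < eps.

Definition lim_right (h : R -> pt) (a : R) (L : pt) : Prop :=
  forall eps, 0 < eps -> exists delta, 0 < delta /\
    forall t, a < t < a + delta -> pdist (h t) L < eps.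
Definition lim_left (h : R -> pt) (b : R) (L : pt) : Prop :=
  forall eps, 0 < eps -> exists delta, 0 < delta /\
    forall t, b - delta < t < b -> pdist (h t) L < eps.

(* unit normal of an arc: the tangent rotated by -pi/2 (right-hand normal);
   for a positively oriented closed curve this is the outward-pointing normal *)
Definition normal (f : R -> pt) (t : R) : pt :=
  pscal (/ pnorm (dvec f t)) (rot_cw (dvec f t)).

Definition weak_immersion_arc (c : arc) : Prop :=
  let f := afun c in let a := alo c in let b := ahi c in
  a < b /\
  continuous_on_closed f a b /\
  smooth_on (fun s => fst (f s)) a b /\ smooth_on (fun s => snd (f s)) a b /\
  (forall t, a < t < b -> dvec f t <> (0, 0)) /\
  (exists L, lim_right (normal f) a L) /\
  (exists L, lim_left (normal f) b L).

Definition dummy_arc : arc := (fun _ => (0, 0), 0, 1).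
Definition next_index (C : list arc) (i : nat) : nat := ((S i) mod (length C))%nat.

Definition closed_pw_curve (C : list arc) : Prop :=
  C <> [] /\ Forall weak_immersion_arc C /\
  forall i, (i < length C)%nat ->
    afun (nth i C dummy_arc) (ahi (nth i C dummy_arc)) =
    afun (nth (next_index C i) C dummy_arc) (alo (nth (next_index C i) C dummy_arc)).

Definition curve_image (C : list arc) (X : pt) : Prop :=
  exists c, In c C /\ exists t, alo c <= t <= ahi c /\ X = afun c t.

(** Signed (enclosed) area  (1/2) \oint (x dy - y dx); the curve is positively
    oriented when it is > 0, and then [normal] is the outward-pointing normal. *)
Definition arc_area (c : arc) (A : R) : Prop :=
  let f := afun c in
  exists pr : Riemann_integrable
      (fun t => (fst (f t) * snd (dvec f t) - snd (f t) * fst (dvec f t)) / 2)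
      (alo c) (ahi c),
    RiemannInt pr = A.
Definition positively_oriented (C : list arc) : Prop :=
  exists As : list R, Forall2 arc_area C As /\ 0 < fold_right Rplus 0 As.

(** Cahn--Hoffman field xi~ = xi_g o nu and anisotropic curvature
    Lambda = - trace(d xi~) (relative to dX) at regular (interior) points. *)
Definition CH_field (g : pt -> R) (f : R -> pt) (t : R) : pt := CH g (normal f t).
Definition aniso_curv (g : pt -> R) (f : R -> pt) (t : R) : R :=
  - dot (dvec (CH_field g f) t) (dvec f t) / dot (dvec f t) (dvec f t).

Definition CAMC_with (g : pt -> R) (C : list arc) (Lam : R) : Prop :=
  (forall c, In c C -> forall t, alo c < t < ahi c -> aniso_curv g (afun c) t = Lam) /\
  (forall i, (i < length C)%nat -> forall n1 n2,
     lim_left (normal (afun (nth i C dummy_arc))) (ahi (nth i C dummy_arc)) n1 ->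
     lim_right (normal (afun (nth (next_index C i) C dummy_arc)))
               (alo (nth (next_index C i) C dummy_arc)) n2 ->
     CH g n1 = CH g n2).
Definition CAMC (g : pt -> R) (C : list arc) : Prop := exists Lam, CAMC_with g C Lam.

Definition gamma6 (nu : pt) : R := fst nu ^ 6 + snd nu ^ 6.
Definition xi (theta : R) : pt := CHang gamma6 theta.

Definition theta1 : R := acos ((sqrt 5 + 1) / (2 * sqrt 3)).
Definition theta2 : R := PI / 2 - theta1.
Definition theta3 : R := PI / 2 + theta1.
Definition theta4 : R := PI - theta1.
Definition theta5 : R := PI + theta1.
Definition theta6 : R := 3 * PI / 2 - theta1.
Definition theta7 : R := 3 * PI / 2 + theta1.
Definition theta8 : R := - theta1.
Definition rho1 : R := acos (sqrt ((1 + sqrt 5) / 6)).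
Definition rho2 : R := acos (sqrt ((5 - sqrt 5) / 6)).

Definition xi_image (I : R -> Prop) (X : pt) : Prop := exists th, I th /\ X = xi th.
Definition Icc (a b t : R) : Prop := a <= t <= b.

Definition fwd (a b : R) : arc := (xi, a, b).
Definition bwd (a b : R) : arc := (fun t => xi (- t), - b, - a).

(* the curves (C_gamma)_k, with the arcs in traversal order, positively oriented *)
Definition Cgamma1 : list arc :=
  [bwd theta8 theta1; bwd theta2 theta3; bwd theta4 theta5; bwd theta6 theta7].
Definition Cgamma2 : list arc := [fwd theta1 theta2; fwd theta5 theta6].
Definition Cgamma3 : list arc :=
  [bwd theta8 theta1; fwd theta3 (rho2 + PI / 2); fwd (rho1 + PI) theta6].
Definition Cgamma4 : list arc :=
  [fwd theta1 rho1; fwd (rho2 + 3 * PI / 2) (theta8 + 2 * PI);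
   fwd theta3 (rho1 + PI / 2); fwd rho2 theta2;
   fwd theta5 (rho1 + PI); fwd (rho2 + PI / 2) theta4;
   fwd theta7 (rho1 + 3 * PI / 2); fwd (rho2 + PI) theta6].
Definition Cgamma5 : list arc := [bwd theta1 rho1; bwd theta8 theta1; bwd (- rho1) theta8].

(* Main.v *)
Require Import Defs.
From Stdlib Require Import Reals Lra Psatz List ClassicalEpsilon FunctionalExtensionality Classical.
Open Scope R_scope.

Lemma deriv_eq f t l : derivable_pt_lim f t l -> deriv f t = l.
Proof.
  intro H. unfold deriv.
  assert (E : exists l, derivable_pt_lim f t l) by (exists l; exact H).
  pose proof (epsilon_spec (inhabits 0) _ E) as H2.
  eapply uniqueness_limite; eauto.
Qed.

Inductive tp := TC (r:R) | TCos | TSin | TCk (k:R) | TSk (k:R) | TAdd (a b: tp) | TMul (a b:tp) | TPow (a:tp) (n:nat).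

Fixpoint ev (e:tp) (t:R) : R :=
  match e with
  | TC r => r | TCos => cos t | TSin => sin t | TCk k => cos (k*t) | TSk k => sin (k*t)
  | TAdd a b => ev a t + ev b t | TMul a b => ev a t * ev b t
  | TPow a n => ev a t ^ n end.

Fixpoint td (e:tp) : tp :=
  match e with
  | TC _ => TC 0 | TCos => TMul (TC (-1)) TSin | TSin => TCos
  | TCk k => TMul (TC (-k)) (TSk k) | TSk k => TMul (TC k) (TCk k)
  | TAdd a b => TAdd (td a) (td b)
  | TMul a b => TAdd (TMul (td a) b) (TMul a (td b))
  | TPow a n => TMul (TMul (TC (INR n)) (TPow a (pred n))) (td a) end.

Lemma dlin k t : derivable_pt_lim (fun x => k*x) t k.
Proof. pose proof (derivable_pt_lim_scal id k t 1 (derivable_pt_lim_id t)) as H. rewrite Rmult_1_r in H. exact H. Qed.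

Lemma td_ok e t : derivable_pt_lim (ev e) t (ev (td e) t).
Proof.
  induction e; simpl.
  - apply derivable_pt_lim_const.
  - replace (-1 * sin t) with (- sin t) by ring. apply derivable_pt_lim_cos.
  - apply derivable_pt_lim_sin.
  - replace (- k * sin (k*t)) with ((- sin (k*t)) * k) by ring.
    apply (derivable_pt_lim_comp (fun t => k*t) cos).
    + apply dlin.
    + apply derivable_pt_lim_cos.
  - replace (k * cos (k*t)) with ((cos (k*t)) * k) by ring.
    apply (derivable_pt_lim_comp (fun t => k*t) sin).
    + apply dlin.
    + apply derivable_pt_lim_sin.
  - apply (derivable_pt_lim_plus (ev e1) (ev e2)); auto.
  - replace (ev (td e1) t * ev e2 t + ev e1 t * ev (td e2) t)
      with (ev (td e1) t * ev e2 t + ev e1 t * ev (td e2) t) by ring.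
    apply (derivable_pt_lim_mult (ev e1) (ev e2)); auto.
  - apply (derivable_pt_lim_comp (ev e) (fun x => x ^ n)); auto.
    apply derivable_pt_lim_pow.
Qed.

Ltac reify t e :=
  lazymatch e with
  | cos (?k * t) => constr:(TCk k)
  | sin (?k * t) => constr:(TSk k)
  | cos t => constr:(TCos)
  | sin t => constr:(TSin)
  | ?a + ?b => let x := reify t a in let y := reify t b in constr:(TAdd x y)
  | ?a - ?b => let x := reify t a in let y := reify t b in constr:(TAdd x (TMul (TC (-1)) y))
  | - ?a => let x := reify t a in constr:(TMul (TC (-1)) x)
  | ?a * ?b => let x := reify t a in let y := reify t b in constr:(TMul x y)
  | ?a / ?b => let x := reify t a in constr:(TMul x (TC (/ b)))
  | ?a ^ ?n => let x := reify t a in constr:(TPow x n)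
  | _ => constr:(TC e)
  end.


Lemma deriv_tp_eq (f:R->R) (E:tp) : (forall t, f t = ev E t) -> forall t, deriv f t = ev (td E) t.
Proof.
  intros H t. replace f with (ev E) by (apply functional_extensionality; intro; rewrite H; auto).
  apply deriv_eq, td_ok.
Qed.

Lemma dlim_tp (f:R->R) (E:tp) : (forall t, f t = ev E t) -> forall t, derivable_pt_lim f t (ev (td E) t).
Proof.
  intros H t. replace f with (ev E) by (apply functional_extensionality; intro; rewrite H; auto).
  apply td_ok.
Qed.

Lemma dlim_tp' (f:R->R) (E:tp) t l : (forall t, f t = ev E t) -> ev (td E) t = l -> derivable_pt_lim f t l.
Proof. intros H <-. apply dlim_tp; auto. Qed.

Ltac reify_goal := intro; match goal with |- ?l = ev ?E ?t =>
   let e := reify t l in instantiate (1:=e) end; simpl; unfold Rdiv; ring.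

Definition chx (a b : R) := 6*a*b*(b^4-a^4) * (-b) + (a^6+b^6)*a.
Definition chy (a b : R) := 6*a*b*(b^4-a^4) * a + (a^6+b^6)*b.


Definition XX c s := c*(c^6+6*c^4*s^2-5*s^6).
Definition YY c s := s*(-5*c^6+6*c^2*s^4+s^6).
Definition lam (t:R) := 45 * cos t ^ 2 * sin t ^ 2 - 5.
Definition gm (t:R) := cos t ^ 6 + sin t ^ 6.

Ltac tpify f HE :=
  let E := fresh "E" in evar (E : tp);
  assert (HE : forall t, f t = ev E t) by (subst E; cbv beta; unfold XX, YY, gamma6, padd, pscal, rot_ccw, rot_cw, dot; cbn [fst snd]; reify_goal).

Lemma CH_g6 a b : CH gamma6 (a,b) = (chx a b, chy a b).
Proof.
  unfold CH, grad_S1.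
  tpify (fun s => gamma6 (padd (pscal (cos s) (a, b)) (pscal (sin s) (rot_ccw (a, b))))) HE.
  rewrite (deriv_tp_eq _ _ HE 0). subst E. simpl. rewrite cos_0, sin_0.
  unfold chx, chy, pscal, gamma6, rot_ccw, padd; simpl. f_equal; field.
Qed.


Lemma CH_XY a b : CH gamma6 (a,b) = (XX a b, YY a b).
Proof. rewrite CH_g6. unfold chx, chy, XX, YY. f_equal; ring. Qed.

Lemma xi_XY t : xi t = (XX (cos t) (sin t), YY (cos t) (sin t)).
Proof. unfold xi, CHang. apply CH_XY. Qed.

Lemma cs1 t : cos t ^ 2 + sin t ^ 2 = 1.
Proof. rewrite <- (sin2_cos2 t). unfold Rsqr. ring. Qed.

Lemma dxi_x t : derivable_pt_lim (fun t => fst (xi t)) t (- sin t * lam t).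
Proof.
  tpify (fun t => XX (cos t) (sin t)) HE.
  replace (fun t => fst (xi t)) with (fun t => XX (cos t) (sin t)).
  2:{ apply functional_extensionality; intro; rewrite xi_XY; reflexivity. }
  apply (dlim_tp' _ _ _ _ HE). subst E. unfold lam. simpl.
  transitivity (- sin t * ((cos t^2+sin t^2)*(45*cos t^2*sin t^2 - 5*(cos t^2+sin t^2)^2))).
  - ring.
  - rewrite cs1. ring.
Qed.

Lemma dxi_y t : derivable_pt_lim (fun t => snd (xi t)) t (cos t * lam t).
Proof.
  tpify (fun t => YY (cos t) (sin t)) HE.
  replace (fun t => snd (xi t)) with (fun t => YY (cos t) (sin t)).
  2:{ apply functional_extensionality; intro; rewrite xi_XY; reflexivity. }
  apply (dlim_tp' _ _ _ _ HE). subst E. unfold lam. simpl.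
  transitivity (cos t * ((cos t^2+sin t^2)*(45*cos t^2*sin t^2 - 5*(cos t^2+sin t^2)^2))).
  - ring.
  - rewrite cs1. ring.
Qed.

Definition r5 := sqrt 5.
Definition r3 := sqrt 3.
Lemma r5_2 : r5 * r5 = 5. Proof. unfold r5; apply sqrt_sqrt; lra. Qed.
Lemma r3_2 : r3 * r3 = 3. Proof. unfold r3; apply sqrt_sqrt; lra. Qed.
Lemma r5_pos : 0 < r5. Proof. unfold r5; apply sqrt_lt_R0; lra. Qed.
Lemma r3_pos : 0 < r3. Proof. unfold r3; apply sqrt_lt_R0; lra. Qed.
Lemma r5_bnd : 2.236 < r5 < 2.2361.
Proof. pose proof r5_2; pose proof r5_pos; split; nra. Qed.
Lemma r3_bnd : 1.732 < r3 < 1.7321.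
Proof. pose proof r3_2; pose proof r3_pos; split; nra. Qed.
Lemma r5ss n : r5 ^ (S (S n)) = 5 * r5 ^ n.
Proof. simpl. rewrite <- r5_2. ring. Qed.

Definition cth1 := (r5+1)/(2*r3).
Definition sth1 := (r5-1)/(2*r3).

Lemma c1_sq : cth1^2 = (3 + r5)/6.
Proof. unfold cth1. pose proof r3_pos. field_simplify. 2: lra.
  replace (r5^2) with (r5*r5) by ring. replace (r3^2) with (r3*r3) by ring. rewrite r5_2, r3_2. field. Qed.
Lemma s1_sq : sth1^2 = (3 - r5)/6.
Proof. unfold sth1. pose proof r3_pos. field_simplify. 2: lra.
  replace (r5^2) with (r5*r5) by ring. replace (r3^2) with (r3*r3) by ring. rewrite r5_2, r3_2. field. Qed.
Lemma c1s1 : cth1 * sth1 = 1/3.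
Proof. unfold cth1, sth1. pose proof r3_pos. field_simplify. 2: lra.
  replace (r5^2) with (r5*r5) by ring. replace (r3^2) with (r3*r3) by ring. rewrite r5_2, r3_2. field. Qed.
Lemma c1_bnd : 0.934 < cth1 < 0.9343.
Proof. pose proof r3_bnd; pose proof r5_bnd.
  assert (2*r3*cth1 = r5+1) by (unfold cth1; field; lra).
  assert (0 < cth1) by (unfold cth1; apply Rdiv_lt_0_compat; lra).
  assert ((1.7321 - r3)*cth1 > 0) by (apply Rmult_lt_0_compat; lra).
  assert ((r3 - 1.732)*cth1 > 0) by (apply Rmult_lt_0_compat; lra).
  split; nra. Qed.
Lemma s1_pos : 0 < sth1.
Proof. unfold sth1. pose proof r3_bnd; pose proof r5_bnd. apply Rdiv_lt_0_compat; nra. Qed.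

Lemma cos_th1 : cos theta1 = cth1.
Proof. unfold theta1. fold r5 r3. fold cth1. apply cos_acos. pose proof c1_bnd. lra. Qed.
Lemma sin_th1 : sin theta1 = sth1.
Proof. unfold theta1. fold r5 r3. fold cth1. rewrite sin_acos. 2: pose proof c1_bnd; lra.
  apply sqrt_lem_1. pose proof c1_sq. pose proof r5_bnd. unfold Rsqr. nra. pose proof s1_pos; lra.
  pose proof c1_sq. pose proof s1_sq. unfold Rsqr. nra. Qed.

Lemma th1_pos : 0 < theta1.
Proof. pose proof (acos_bound ((sqrt 5 + 1) / (2 * sqrt 3))). unfold theta1 in *.
  destruct H as [H _]. destruct H as [H|H]; auto. exfalso.
  pose proof cos_th1. unfold theta1 in H0. rewrite <- H in H0. rewrite cos_0 in H0.
  pose proof c1_bnd. lra. Qed.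

Lemma cos_PI4' : cos (PI/4) = sqrt 2 / 2.
Proof. rewrite cos_PI4. pose proof Rlt_sqrt2_0. assert (H2: sqrt 2 * sqrt 2 = 2) by (apply sqrt_sqrt; lra).
  field_simplify_eq; nra. Qed.

Lemma r2_bnd : 1.414 < sqrt 2 < 1.4143.
Proof. pose proof (sqrt_sqrt 2). pose proof Rlt_sqrt2_0. split; nra. Qed.

Lemma th1_PI4 : theta1 < PI/4.
Proof. destruct (Rlt_le_dec theta1 (PI/4)) as [H|H]; auto. exfalso.
  pose proof (acos_bound ((sqrt 5 + 1) / (2 * sqrt 3))). fold theta1 in H0.
  pose proof PI_RGT_0.
  destruct H as [H|H].
  - pose proof (cos_decreasing_1 (PI/4) theta1 ltac:(lra) ltac:(lra) ltac:(lra) ltac:(lra) H).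
    rewrite cos_th1, cos_PI4' in H2. pose proof r2_bnd. pose proof c1_bnd. lra.
  - pose proof cos_th1 as H2. rewrite <- H in H2. rewrite cos_PI4' in H2. pose proof r2_bnd. pose proof c1_bnd. lra.
Qed.

Definition cr := sqrt ((1 + r5)/6).
Definition sr := sqrt ((5 - r5)/6).
Lemma cr_sq : cr^2 = (1+r5)/6.
Proof. unfold cr. apply pow2_sqrt. pose proof r5_pos. lra. Qed.
Lemma sr_sq : sr^2 = (5-r5)/6.
Proof. unfold sr. apply pow2_sqrt. pose proof r5_bnd. lra. Qed.
Lemma cr_pos : 0 < cr.
Proof. unfold cr. apply sqrt_lt_R0. pose proof r5_pos. lra. Qed.
Lemma sr_pos : 0 < sr.
Proof. unfold sr. apply sqrt_lt_R0. pose proof r5_bnd. lra. Qed.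
Lemma cr_bnd : 0.7343 < cr < 0.7345.
Proof. pose proof cr_sq; pose proof cr_pos; pose proof r5_bnd. split; nra. Qed.

Lemma cos_rho1 : cos rho1 = cr.
Proof. unfold rho1. fold r5. fold cr. apply cos_acos. pose proof cr_bnd. lra. Qed.
Lemma sin_rho1 : sin rho1 = sr.
Proof. unfold rho1. fold r5 cr. rewrite sin_acos. 2: pose proof cr_bnd; lra.
  unfold sr. f_equal. unfold Rsqr. pose proof cr_sq. nra. Qed.

Lemma rho1_bnd : theta1 < rho1 < PI/4.
Proof.
  pose proof (acos_bound (sqrt ((1 + sqrt 5)/6))). fold rho1 in H.
  pose proof (acos_bound ((sqrt 5 + 1) / (2 * sqrt 3))). fold theta1 in H0.
  pose proof PI_RGT_0. pose proof cr_bnd. pose proof c1_bnd. pose proof r2_bnd.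
  split.
  - apply (cos_decreasing_0 rho1 theta1); try lra. rewrite cos_rho1, cos_th1. lra.
  - apply (cos_decreasing_0 (PI/4) rho1); try lra. rewrite cos_rho1, cos_PI4'. lra.
Qed.

Lemma rho2_eq : rho2 = PI/2 - rho1.
Proof.
  pose proof rho1_bnd. pose proof th1_pos. pose proof PI_RGT_0.
  unfold rho2. fold r5. fold sr. rewrite <- sin_rho1. rewrite <- cos_shift.
  apply acos_cos. lra. Qed.

Lemma cos_addh t : cos (t + PI/2) = - sin t.
Proof. rewrite cos_plus, cos_PI2, sin_PI2. ring. Qed.
Lemma sin_addh t : sin (t + PI/2) = cos t.
Proof. rewrite sin_plus, cos_PI2, sin_PI2. ring. Qed.

Lemma xi_half t : xi (t + PI/2) = rot_ccw (xi t).
Proof. rewrite !xi_XY, cos_addh, sin_addh. unfold rot_ccw, XX, YY; simpl. f_equal; ring. Qed.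
Lemma xi_neg t : xi (- t) = (fst (xi t), - snd (xi t)).
Proof. rewrite !xi_XY, cos_neg, sin_neg. unfold XX, YY; simpl. f_equal; ring. Qed.
Lemma xi_2pi t : xi (t + 2*PI) = xi t.
Proof. replace (t + 2*PI) with ((((t + PI/2) + PI/2) + PI/2) + PI/2) by field.
  rewrite !xi_half. destruct (xi t); unfold rot_ccw; simpl. f_equal; ring. Qed.

Lemma lam_half t : lam (t + PI/2) = lam t.
Proof. unfold lam. rewrite cos_addh, sin_addh. ring. Qed.
Lemma lam_neg t : lam (- t) = lam t.
Proof. unfold lam. rewrite cos_neg, sin_neg. ring. Qed.

Lemma lam_neg0 t : - theta1 < t < theta1 -> lam t < 0.
Proof.
  intro H. pose proof th1_PI4. pose proof PI_RGT_0.
  assert (Hc : cth1 < cos t).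
  { rewrite <- cos_th1. destruct (Rle_dec 0 t).
    - destruct r. apply cos_decreasing_1; lra. subst. rewrite cos_0. rewrite cos_th1. pose proof c1_bnd; lra.
    - rewrite <- (cos_neg t). apply cos_decreasing_1; lra. }
  unfold lam. pose proof (cs1 t). pose proof c1_sq. pose proof c1_bnd. pose proof r5_bnd. pose proof r5_2.
  assert (cos t ^2 > (3+r5)/6) by nra.
  replace (sin t ^2) with (1 - cos t^2) by lra.
  set (x := cos t ^2) in *. nra.
Qed.

Lemma lam_pos0 t : theta1 < t < PI/2 - theta1 -> 0 < lam t.
Proof.
  intro H. pose proof th1_PI4. pose proof PI_RGT_0. pose proof th1_pos.
  assert (Hc : cos t < cth1).
  { rewrite <- cos_th1. apply cos_decreasing_1; lra. }
  assert (Hs : sin t < cth1).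
  { rewrite <- cos_shift, <- cos_th1. apply cos_decreasing_1; lra. }
  assert (0 < cos t) by (apply cos_gt_0; lra).
  assert (0 < sin t) by (apply sin_gt_0; lra).
  unfold lam. pose proof (cs1 t). pose proof c1_sq. pose proof c1_bnd. pose proof r5_bnd. pose proof r5_2.
  assert (cos t ^2 < (3+r5)/6) by nra.
  assert (sin t ^2 < (3+r5)/6) by nra.
  replace (sin t ^2) with (1 - cos t^2) in * by lra.
  set (x := cos t ^2) in *. nra.
Qed.

Lemma pdist_le u v : pdist u v <= Rabs (fst u - fst v) + Rabs (snd u - snd v).
Proof.
  unfold pdist, pnorm, dot, padd, pscal; simpl.
  rewrite <- (sqrt_pow2 (Rabs (fst u - fst v) + Rabs (snd u - snd v))).
  2: { pose proof (Rabs_pos (fst u - fst v)); pose proof (Rabs_pos (snd u - snd v)); lra. }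
  apply sqrt_le_1_alt.
  pose proof (Rabs_pos (fst u - fst v)); pose proof (Rabs_pos (snd u - snd v)).
  pose proof (pow2_abs (fst u - fst v)). pose proof (pow2_abs (snd u - snd v)).
  replace (fst u + -1 * fst v) with (fst u - fst v) by ring.
  replace (snd u + -1 * snd v) with (snd u - snd v) by ring. nra.
Qed.

Lemma pdist_ge1 u v : Rabs (fst u - fst v) <= pdist u v.
Proof.
  unfold pdist, pnorm, dot, padd, pscal; simpl.
  rewrite <- (sqrt_pow2 (Rabs (fst u - fst v))) by apply Rabs_pos.
  apply sqrt_le_1_alt. rewrite pow2_abs.
  replace (fst u + -1 * fst v) with (fst u - fst v) by ring.
  pose proof (Rle_0_sqr (snd u + -1*snd v)). unfold Rsqr in *. simpl. lra.
Qed.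
Lemma pdist_ge2 u v : Rabs (snd u - snd v) <= pdist u v.
Proof.
  unfold pdist, pnorm, dot, padd, pscal; simpl.
  rewrite <- (sqrt_pow2 (Rabs (snd u - snd v))) by apply Rabs_pos.
  apply sqrt_le_1_alt. rewrite pow2_abs.
  replace (snd u + -1 * snd v) with (snd u - snd v) by ring.
  pose proof (Rle_0_sqr (fst u + -1*fst v)). unfold Rsqr in *. simpl. lra.
Qed.

Lemma pdist_self u : pdist u u = 0.
Proof. unfold pdist, pnorm, dot, padd, pscal; simpl.
  replace (fst u + -1 * fst u) with 0 by ring. replace (snd u + -1 * snd u) with 0 by ring.
  replace (0*0+0*0) with 0 by ring. apply sqrt_0. Qed.

Lemma cont_eps f x : continuity_pt f x -> forall eps, 0<eps -> exists d, 0<d /\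
  forall y, Rabs (y - x) < d -> Rabs (f y - f x) < eps.
Proof.
  intros H eps He. unfold continuity_pt, continue_in, limit1_in, limit_in, D_x, no_cond in H.
  simpl in H. unfold R_dist in H. destruct (H eps He) as [d [Hd Hd2]].
  exists d. split; auto. intros y Hy. destruct (Req_dec x y).
  - subst. replace (f y - f y) with 0 by ring. rewrite Rabs_R0; auto.
  - apply Hd2. split; auto.
Qed.

Lemma dlim_loc f1 f2 a b t l : a < t < b -> (forall x, a < x < b -> f1 x = f2 x) ->
  derivable_pt_lim f2 t l -> derivable_pt_lim f1 t l.
Proof.
  intros Ht Heq H eps He. destruct (H eps He) as [d Hd].
  assert (Hp : 0 < Rmin d (Rmin (t - a) (b - t))).
  { pose proof (cond_pos d). apply Rmin_pos; auto. apply Rmin_pos; lra. }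
  exists (mkposreal _ Hp). intros h Hh Hh2. simpl in Hh2.
  pose proof (Rmin_l d (Rmin (t - a) (b - t))). pose proof (Rmin_r d (Rmin (t - a) (b - t))).
  pose proof (Rmin_l (t - a) (b - t)). pose proof (Rmin_r (t - a) (b - t)).
  apply Rabs_def2 in Hh2.
  rewrite !Heq by lra. apply Hd; auto. apply Rabs_def1; lra.
Qed.

Lemma dscal g a t l : derivable_pt_lim g t l -> derivable_pt_lim (fun x => a * g x) t (a*l).
Proof. intro H. exact (derivable_pt_lim_scal g a t l H). Qed.

Lemma smooth_tp g E a b : (forall t, g t = ev E t) -> smooth_on g a b.
Proof.
  intro H. exists (fun n => ev (Nat.iter n td E)). split.
  - intros; simpl; auto.
  - intros n t _. simpl. apply td_ok.
Qed.

Lemma cont_tp g E : (forall t, g t = ev E t) -> forall t, continuity_pt g t.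
Proof.
  intros H t. apply derivable_continuous_pt. exists (ev (td E) t). apply dlim_tp; auto.
Qed.

Lemma cont_closed f a b : (forall t, continuity_pt (fun s => fst (f s)) t) ->
  (forall t, continuity_pt (fun s => snd (f s)) t) -> continuous_on_closed f a b.
Proof.
  intros H1 H2 t _ eps He.
  destruct (cont_eps _ _ (H1 t) (eps/2) ltac:(lra)) as [d1 [Hd1 Hd1']].
  destruct (cont_eps _ _ (H2 t) (eps/2) ltac:(lra)) as [d2 [Hd2 Hd2']].
  exists (Rmin d1 d2). split. apply Rmin_pos; auto.
  intros s _ Hs. pose proof (Rmin_l d1 d2). pose proof (Rmin_r d1 d2).
  pose proof (pdist_le (f s) (f t)).
  pose proof (Hd1' s ltac:(lra)). pose proof (Hd2' s ltac:(lra)). simpl in *. lra.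
Qed.

Lemma lim_right_cont h H a b : a < b -> (forall t, a < t < b -> h t = H t) ->
  continuity_pt (fun s => fst (H s)) a -> continuity_pt (fun s => snd (H s)) a ->
  lim_right h a (H a).
Proof.
  intros Hab Heq H1 H2 eps He.
  destruct (cont_eps _ _ H1 (eps/2) ltac:(lra)) as [d1 [Hd1 Hd1']].
  destruct (cont_eps _ _ H2 (eps/2) ltac:(lra)) as [d2 [Hd2 Hd2']].
  exists (Rmin (b - a) (Rmin d1 d2)). split. apply Rmin_pos. lra. apply Rmin_pos; auto.
  intros t Ht. pose proof (Rmin_l (b-a) (Rmin d1 d2)). pose proof (Rmin_r (b-a) (Rmin d1 d2)).
  pose proof (Rmin_l d1 d2). pose proof (Rmin_r d1 d2).
  rewrite Heq by lra. pose proof (pdist_le (H t) (H a)).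
  assert (Rabs (t - a) < d1) by (rewrite Rabs_right; lra).
  assert (Rabs (t - a) < d2) by (rewrite Rabs_right; lra).
  pose proof (Hd1' t ltac:(lra)). pose proof (Hd2' t ltac:(lra)). simpl in *. lra.
Qed.

Lemma lim_left_cont h H a b : a < b -> (forall t, a < t < b -> h t = H t) ->
  continuity_pt (fun s => fst (H s)) b -> continuity_pt (fun s => snd (H s)) b ->
  lim_left h b (H b).
Proof.
  intros Hab Heq H1 H2 eps He.
  destruct (cont_eps _ _ H1 (eps/2) ltac:(lra)) as [d1 [Hd1 Hd1']].
  destruct (cont_eps _ _ H2 (eps/2) ltac:(lra)) as [d2 [Hd2 Hd2']].
  exists (Rmin (b - a) (Rmin d1 d2)). split. apply Rmin_pos. lra. apply Rmin_pos; auto.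
  intros t Ht. pose proof (Rmin_l (b-a) (Rmin d1 d2)). pose proof (Rmin_r (b-a) (Rmin d1 d2)).
  pose proof (Rmin_l d1 d2). pose proof (Rmin_r d1 d2).
  rewrite Heq by lra. pose proof (pdist_le (H t) (H b)).
  assert (Rabs (t - b) < d1) by (rewrite Rabs_left; lra).
  assert (Rabs (t - b) < d2) by (rewrite Rabs_left; lra).
  pose proof (Hd1' t ltac:(lra)). pose proof (Hd2' t ltac:(lra)). simpl in *. lra.
Qed.

Lemma pt_eq_eps (u v : pt) : (forall e, 0 < e -> Rabs (fst u - fst v) < e /\ Rabs (snd u - snd v) < e) -> u = v.
Proof.
  intro H. destruct u as [u1 u2], v as [v1 v2]; simpl in *.
  assert (u1 = v1).
  { destruct (Req_dec u1 v1); auto. exfalso. assert (0 < Rabs (u1 - v1)) by (apply Rabs_pos_lt; lra).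
    destruct (H _ H1). lra. }
  assert (u2 = v2).
  { destruct (Req_dec u2 v2); auto. exfalso. assert (0 < Rabs (u2 - v2)) by (apply Rabs_pos_lt; lra).
    destruct (H _ H2). lra. }
  subst; auto.
Qed.

Lemma close_pts (u v w : pt) e : pdist w u < e -> pdist w v < e ->
  Rabs (fst u - fst v) < 2*e /\ Rabs (snd u - snd v) < 2*e.
Proof.
  intros H1 H2. pose proof (pdist_ge1 w u). pose proof (pdist_ge1 w v).
  pose proof (pdist_ge2 w u). pose proof (pdist_ge2 w v).
  split.
  - replace (fst u - fst v) with (- (fst w - fst u) + (fst w - fst v)) by ring.
    eapply Rle_lt_trans. apply Rabs_triang. rewrite Rabs_Ropp. lra.
  - replace (snd u - snd v) with (- (snd w - snd u) + (snd w - snd v)) by ring.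
    eapply Rle_lt_trans. apply Rabs_triang. rewrite Rabs_Ropp. lra.
Qed.

Lemma lim_right_uniq h a L1 L2 : lim_right h a L1 -> lim_right h a L2 -> L1 = L2.
Proof.
  intros H1 H2. apply pt_eq_eps. intros e He.
  destruct (H1 (e/2) ltac:(lra)) as [d1 [Hd1 Hd1']].
  destruct (H2 (e/2) ltac:(lra)) as [d2 [Hd2 Hd2']].
  set (t := a + Rmin d1 d2 / 2). pose proof (Rmin_l d1 d2). pose proof (Rmin_r d1 d2).
  assert (0 < Rmin d1 d2) by (apply Rmin_pos; auto).
  pose proof (close_pts L1 L2 (h t) (e/2) (Hd1' t ltac:(unfold t; lra)) (Hd2' t ltac:(unfold t; lra))).
  lra.
Qed.

Lemma lim_left_uniq h a L1 L2 : lim_left h a L1 -> lim_left h a L2 -> L1 = L2.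
Proof.
  intros H1 H2. apply pt_eq_eps. intros e He.
  destruct (H1 (e/2) ltac:(lra)) as [d1 [Hd1 Hd1']].
  destruct (H2 (e/2) ltac:(lra)) as [d2 [Hd2 Hd2']].
  set (t := a - Rmin d1 d2 / 2). pose proof (Rmin_l d1 d2). pose proof (Rmin_r d1 d2).
  assert (0 < Rmin d1 d2) by (apply Rmin_pos; auto).
  pose proof (close_pts L1 L2 (h t) (e/2) (Hd1' t ltac:(unfold t; lra)) (Hd2' t ltac:(unfold t; lra))).
  lra.
Qed.

Definition kspec (k:R) := k = 1 \/ k = -1.
Lemma kspec_sq k : kspec k -> k*k = 1.
Proof. intros [->| ->]; ring. Qed.

Lemma df_x f k t : (forall t, f t = xi (k*t)) ->
  derivable_pt_lim (fun t => fst (f t)) t (k * (- sin (k*t) * lam (k*t))).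
Proof.
  intro Hf. replace (fun t => fst (f t)) with (comp (fun t => fst (xi t)) (fun t => k*t)).
  2:{ apply functional_extensionality; intro; unfold comp; rewrite Hf; auto. }
  rewrite Rmult_comm. apply derivable_pt_lim_comp. apply dlin. apply dxi_x.
Qed.
Lemma df_y f k t : (forall t, f t = xi (k*t)) ->
  derivable_pt_lim (fun t => snd (f t)) t (k * (cos (k*t) * lam (k*t))).
Proof.
  intro Hf. replace (fun t => snd (f t)) with (comp (fun t => snd (xi t)) (fun t => k*t)).
  2:{ apply functional_extensionality; intro; unfold comp; rewrite Hf; auto. }
  rewrite Rmult_comm. apply derivable_pt_lim_comp. apply dlin. apply dxi_y.
Qed.

Lemma dvec_f f k t : (forall t, f t = xi (k*t)) ->
  dvec f t = (k * (- sin (k*t) * lam (k*t)), k * (cos (k*t) * lam (k*t))).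
Proof. intro Hf. unfold dvec. rewrite (deriv_eq _ _ _ (df_x f k t Hf)), (deriv_eq _ _ _ (df_y f k t Hf)). auto. Qed.

Lemma normal_f f k e t : kspec k -> (forall t, f t = xi (k*t)) -> kspec e -> 0 < e * lam (k*t) ->
  normal f t = (k*e*cos (k*t), k*e*sin (k*t)).
Proof.
  intros Hk Hf He Hl. unfold normal. rewrite (dvec_f f k t Hf).
  pose proof (kspec_sq k Hk) as Hkk. pose proof (kspec_sq e He) as Hee. pose proof (cs1 (k*t)) as Hcs.
  unfold pnorm, dot, rot_cw, pscal; simpl.
  set (l := lam (k*t)) in *. set (c := cos (k*t)) in *. set (s := sin (k*t)) in *.
  replace (k * (- s * l) * (k * (- s * l)) + k * (c * l) * (k * (c * l))) with ((e*l)^2).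
  2:{ symmetry. transitivity ((k*k)*(l*l)*(c^2+s^2)); [ring|]. rewrite Hkk, Hcs.
        transitivity ((e*e)*(l*l)); [rewrite Hee; ring | ring]. }
  rewrite sqrt_pow2 by lra.
  assert (e*l <> 0) by lra. assert (e <> 0) by (intro; subst; lra).
  assert (Hie: /e = e) by (destruct He as [-> | ->]; field).
  assert (l <> 0) by (intro Hz; rewrite Hz in Hl; lra).
  f_equal.
  - transitivity (k*c*/e); [field; auto|]. rewrite Hie. ring.
  - transitivity (k*s*/e); [field; auto|]. rewrite Hie. ring.
Qed.

Lemma XX_scal sg c s : sg*sg = 1 -> XX (sg*c) (sg*s) = sg * XX c s.
Proof. intro H. transitivity (sg^7 * XX c s); [unfold XX; ring|].
  replace (sg^7) with (sg*(sg*sg)^3) by ring. rewrite H; ring. Qed.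
Lemma YY_scal sg c s : sg*sg = 1 -> YY (sg*c) (sg*s) = sg * YY c s.
Proof. intro H. transitivity (sg^7 * YY c s); [unfold YY; ring|].
  replace (sg^7) with (sg*(sg*sg)^3) by ring. rewrite H; ring. Qed.

Lemma CH_unit_scal sg t : sg*sg = 1 -> CH gamma6 (sg * cos t, sg * sin t) = (sg * fst (xi t), sg * snd (xi t)).
Proof. intro H. rewrite CH_XY, xi_XY, XX_scal, YY_scal; auto. Qed.

Lemma CH_field_f f k e t : kspec k -> (forall t, f t = xi (k*t)) -> kspec e -> 0 < e * lam (k*t) ->
  CH_field gamma6 f t = (k*e*fst (f t), k*e*snd (f t)).
Proof.
  intros Hk Hf He Hl. unfold CH_field. rewrite (normal_f f k e t Hk Hf He Hl).
  rewrite Hf. apply CH_unit_scal.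
  pose proof (kspec_sq k Hk). pose proof (kspec_sq e He).
  transitivity ((k*k)*(e*e)); [ring|]. rewrite H, H0; ring.
Qed.

Lemma aniso_f f k e a b t : kspec k -> (forall t, f t = xi (k*t)) -> kspec e ->
  (forall x, a < x < b -> 0 < e * lam (k*x)) -> a < t < b ->
  aniso_curv gamma6 f t = - (k*e).
Proof.
  intros Hk Hf He Hs Ht. unfold aniso_curv.
  assert (HD : dvec (CH_field gamma6 f) t = (k*e*(k * (- sin (k*t) * lam (k*t))), k*e*(k * (cos (k*t) * lam (k*t))))).
  { unfold dvec. f_equal; apply deriv_eq.
    - apply (dlim_loc _ (fun x => k*e*fst (f x)) a b); auto.
      + intros x Hx. rewrite (CH_field_f f k e x Hk Hf He (Hs x Hx)). auto.
      + apply dscal. apply df_x; auto.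
    - apply (dlim_loc _ (fun x => k*e*snd (f x)) a b); auto.
      + intros x Hx. rewrite (CH_field_f f k e x Hk Hf He (Hs x Hx)). auto.
      + apply dscal. apply df_y; auto. }
  rewrite HD, (dvec_f f k t Hf). unfold dot; simpl.
  pose proof (Hs t Ht). pose proof (kspec_sq k Hk). pose proof (kspec_sq e He). pose proof (cs1 (k*t)).
  set (l := lam (k*t)) in *. set (c := cos (k*t)) in *. set (s := sin (k*t)) in *.
  assert (l <> 0) by (intro Hz; rewrite Hz in H; lra).
  assert (Hden : k * (- s * l) * (k * (- s * l)) + k * (c * l) * (k * (c * l)) = l*l).
  { transitivity ((k*k)*(l*l)*(c^2+s^2)); [ring|]. rewrite H0, H2. ring. }
  replace (k * e * (k * (- s * l)) * (k * (- s * l)) + k * e * (k * (c * l)) * (k * (c * l)))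
    with (k*e*(l*l)) by (rewrite <- Hden; ring).
  rewrite Hden. field. auto.
Qed.

Lemma cont_fx f k t : (forall t, f t = xi (k*t)) -> continuity_pt (fun t => fst (f t)) t.
Proof. intro Hf. apply derivable_continuous_pt. eexists. apply df_x; auto. Qed.
Lemma cont_fy f k t : (forall t, f t = xi (k*t)) -> continuity_pt (fun t => snd (f t)) t.
Proof. intro Hf. apply derivable_continuous_pt. eexists. apply df_y; auto. Qed.

Lemma cont_cosk a k t : continuity_pt (fun t => a * cos (k*t)) t.
Proof. tpify (fun t => a * cos (k*t)) HE. apply (cont_tp _ _ HE). Qed.
Lemma cont_sink a k t : continuity_pt (fun t => a * sin (k*t)) t.
Proof. tpify (fun t => a * sin (k*t)) HE. apply (cont_tp _ _ HE). Qed.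

Lemma normal_lim_right f k e a b : kspec k -> (forall t, f t = xi (k*t)) -> kspec e -> a < b ->
  (forall x, a < x < b -> 0 < e * lam (k*x)) ->
  lim_right (normal f) a (k*e*cos (k*a), k*e*sin (k*a)).
Proof.
  intros Hk Hf He Hab Hs.
  apply (lim_right_cont _ (fun t => (k*e*cos (k*t), k*e*sin (k*t))) a b Hab).
  - intros t Ht. apply normal_f; auto.
  - apply cont_cosk.
  - apply cont_sink.
Qed.
Lemma normal_lim_left f k e a b : kspec k -> (forall t, f t = xi (k*t)) -> kspec e -> a < b ->
  (forall x, a < x < b -> 0 < e * lam (k*x)) ->
  lim_left (normal f) b (k*e*cos (k*b), k*e*sin (k*b)).
Proof.
  intros Hk Hf He Hab Hs.
  apply (lim_left_cont _ (fun t => (k*e*cos (k*t), k*e*sin (k*t))) a b Hab).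
  - intros t Ht. apply normal_f; auto.
  - apply cont_cosk.
  - apply cont_sink.
Qed.

Lemma weak_imm f k e a b : kspec k -> (forall t, f t = xi (k*t)) -> kspec e -> a < b ->
  (forall x, a < x < b -> 0 < e * lam (k*x)) -> weak_immersion_arc (f, a, b).
Proof.
  intros Hk Hf He Hab Hs. unfold weak_immersion_arc, afun, alo, ahi; simpl.
  split; [auto|]. split.
  { apply cont_closed; intro; [apply (cont_fx f k) | apply (cont_fy f k)]; auto. }
  split.
  { tpify (fun t => XX (cos (k*t)) (sin (k*t))) HE.
    apply (smooth_tp _ E). intro t. rewrite <- HE, Hf, xi_XY. auto. }
  split.
  { tpify (fun t => YY (cos (k*t)) (sin (k*t))) HE.
    apply (smooth_tp _ E). intro t. rewrite <- HE, Hf, xi_XY. auto. }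
  split.
  { intros t Ht. rewrite (dvec_f f k t Hf). intro Heq. injection Heq. intros H1 H2.
    pose proof (Hs t Ht) as Hl. pose proof (kspec_sq k Hk) as Hkk. pose proof (cs1 (k*t)) as Hcs.
    set (l := lam (k*t)) in *. set (c := cos (k*t)) in *. set (s := sin (k*t)) in *.
    assert (Hz : k*(c*l)*(k*(c*l)) + k*(-s*l)*(k*(-s*l)) = l*l)
      by (transitivity ((k*k)*(l*l)*(c^2+s^2)); [ring|]; rewrite Hkk, Hcs; ring).
    rewrite H1, H2 in Hz. assert (l = 0) by nra. rewrite H in Hl. lra. }
  split.
  - eexists. apply (normal_lim_right f k e a b); eauto.
  - eexists. apply (normal_lim_left f k e a b); eauto.
Qed.

Definition integ (f : R -> pt) (t : R) : R :=
  (fst (f t) * snd (dvec f t) - snd (f t) * fst (dvec f t)) / 2.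

Lemma integ_f f k t : (forall t, f t = xi (k*t)) -> integ f t = k * lam (k*t) * gm (k*t) / 2.
Proof.
  intro Hf. unfold integ. rewrite (dvec_f f k t Hf), Hf, xi_XY. simpl. unfold gm.
  pose proof (cs1 (k*t)). set (c := cos (k*t)) in *. set (s := sin (k*t)) in *.
  transitivity (k * lam (k*t) * ((c^2+s^2)*(c^6+s^6)) / 2).
  - unfold XX, YY. field.
  - rewrite H. field.
Qed.

Lemma integ_fun f k : (forall t, f t = xi (k*t)) -> integ f = fun t => k * lam (k*t) * gm (k*t) / 2.
Proof. intro Hf. apply functional_extensionality. intro. apply integ_f; auto. Qed.

Lemma cont_integ_expl k t : continuity_pt (fun t => k * lam (k*t) * gm (k*t) / 2) t.
Proof. tpify (fun t => k * (45 * cos (k*t) ^ 2 * sin (k*t) ^ 2 - 5) * (cos (k*t) ^ 6 + sin (k*t) ^ 6) / 2) HE.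
  apply (cont_tp _ E). intro t0. rewrite <- HE. unfold lam, gm. auto. Qed.

Lemma gm_pos t : 0 < gm t.
Proof. unfold gm. pose proof (cs1 t). set (c := cos t) in *. set (s := sin t) in *.
  replace (c^6+s^6) with ((c^2+s^2)^3 - 3*(c^2*s^2)*(c^2+s^2)) by ring. rewrite H.
  pose proof (pow2_ge_0 (c^2 - s^2)).
  assert (4*(c^2*s^2) <= 1). { replace 1 with ((c^2+s^2)^2) by (rewrite H; ring). nra. }
  lra. Qed.

Lemma RI_pos f a b (pr : Riemann_integrable f a b) : a < b ->
  (forall x, a <= x <= b -> continuity_pt f x) -> (forall x, a < x < b -> 0 < f x) -> 0 < RiemannInt pr.
Proof.
  intros Hab Hc Hp.
  set (m := (a+b)/2). assert (Hm : 0 < f m) by (apply Hp; unfold m; lra).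
  destruct (cont_eps f m (Hc m ltac:(unfold m; lra)) (f m / 2) ltac:(lra)) as [d [Hd Hd']].
  set (d' := Rmin d ((b-a)/2) / 2).
  assert (Hd0 : 0 < Rmin d ((b-a)/2)) by (apply Rmin_pos; lra).
  pose proof (Rmin_l d ((b-a)/2)). pose proof (Rmin_r d ((b-a)/2)).
  assert (I1 : Riemann_integrable f a (m - d')).
  { apply continuity_implies_RiemannInt. unfold d', m in *; lra. intros; apply Hc; unfold d', m in *; lra. }
  assert (I2 : Riemann_integrable f (m - d') (m + d')).
  { apply continuity_implies_RiemannInt. unfold d', m in *; lra. intros; apply Hc; unfold d', m in *; lra. }
  assert (I3 : Riemann_integrable f (m + d') b).
  { apply continuity_implies_RiemannInt. unfold d', m in *; lra. intros; apply Hc; unfold d', m in *; lra. }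
  assert (I12 : Riemann_integrable f a (m + d')).
  { apply continuity_implies_RiemannInt. unfold d', m in *; lra. intros; apply Hc; unfold d', m in *; lra. }
  rewrite <- (RiemannInt_P26 I12 I3 pr). rewrite <- (RiemannInt_P26 I1 I2 I12).
  assert (Z1 : Riemann_integrable (fct_cte 0) a (m - d')) by apply RiemannInt_P14.
  assert (Z3 : Riemann_integrable (fct_cte 0) (m + d') b) by apply RiemannInt_P14.
  assert (Z2 : Riemann_integrable (fct_cte (f m / 2)) (m - d') (m + d')) by apply RiemannInt_P14.
  pose proof (RiemannInt_P19 Z1 I1 ltac:(unfold d', m in *; lra)
     (fun x Hx => Rlt_le _ _ (Hp x ltac:(unfold d', m in *; lra)))) as A1.
  pose proof (RiemannInt_P19 Z3 I3 ltac:(unfold d', m in *; lra)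
     (fun x Hx => Rlt_le _ _ (Hp x ltac:(unfold d', m in *; lra)))) as A3.
  assert (A2 : RiemannInt Z2 <= RiemannInt I2).
  { apply RiemannInt_P19. unfold d' in *; lra. intros x Hx. unfold fct_cte.
    assert (Rabs (x - m) < d) by (apply Rabs_def1; unfold d' in *; lra).
    pose proof (Hd' x H1). apply Rabs_def2 in H2. lra. }
  rewrite !RiemannInt_P15 in *. unfold d' in *. nra.
Qed.

Lemma arc_area_pos f k a b : kspec k -> (forall t, f t = xi (k*t)) -> a < b ->
  (forall x, a < x < b -> 0 < k * lam (k*x)) -> exists A, arc_area (f, a, b) A /\ 0 < A.
Proof.
  intros Hk Hf Hab Hs.
  assert (Hcont : forall x, continuity_pt (integ f) x).
  { intro x. rewrite (integ_fun f k Hf). apply cont_integ_expl. }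
  assert (pr : Riemann_integrable (integ f) a b).
  { apply continuity_implies_RiemannInt. lra. intros; apply Hcont. }
  exists (RiemannInt pr). split.
  - exists pr. reflexivity.
  - apply RI_pos; auto. intros x Hx. rewrite (integ_f f k x Hf).
    pose proof (Hs x Hx). assert (0 < gm (k*x)).
    { apply gm_pos. }
    nra.
Qed.

Definition arc_ok (c : arc) (k e : R) :=
  kspec k /\ kspec e /\ (forall t, afun c t = xi (k*t)) /\ alo c < ahi c /\
  (forall x, alo c < x < ahi c -> 0 < e * lam (k*x)).

Lemma arc_ok_right c k e n : arc_ok c k e -> lim_right (normal (afun c)) (alo c) n ->
  CH gamma6 n = (k*e*fst (afun c (alo c)), k*e*snd (afun c (alo c))).
Proof.
  intros [Hk [He [Hf [Hab Hs]]]] Hn.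
  pose proof (normal_lim_right (afun c) k e (alo c) (ahi c) Hk Hf He Hab Hs).
  rewrite (lim_right_uniq _ _ _ _ Hn H). rewrite CH_unit_scal, Hf. auto.
  pose proof (kspec_sq k Hk). pose proof (kspec_sq e He).
  transitivity ((k*k)*(e*e)); [ring|]. rewrite H0, H1; ring.
Qed.

Lemma arc_ok_left c k e n : arc_ok c k e -> lim_left (normal (afun c)) (ahi c) n ->
  CH gamma6 n = (k*e*fst (afun c (ahi c)), k*e*snd (afun c (ahi c))).
Proof.
  intros [Hk [He [Hf [Hab Hs]]]] Hn.
  pose proof (normal_lim_left (afun c) k e (alo c) (ahi c) Hk Hf He Hab Hs).
  rewrite (lim_left_uniq _ _ _ _ Hn H). rewrite CH_unit_scal, Hf. auto.
  pose proof (kspec_sq k Hk). pose proof (kspec_sq e He).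
  transitivity ((k*k)*(e*e)); [ring|]. rewrite H0, H1; ring.
Qed.

Lemma arc_ok_wi c k e : arc_ok c k e -> weak_immersion_arc c.
Proof.
  intros [Hk [He [Hf [Hab Hs]]]]. destruct c as [[f a] b]. unfold afun, alo, ahi in *; simpl in *.
  apply (weak_imm f k e a b); auto.
Qed.

Lemma areas_exist (C : list arc) :
  (forall c, In c C -> exists A, arc_area c A /\ 0 < A) -> C <> [] ->
  exists As, Forall2 arc_area C As /\ 0 < fold_right Rplus 0 As.
Proof.
  induction C as [|c C IH]; intros H Hne; [congruence|].
  destruct (H c (or_introl eq_refl)) as [A [HA HA0]].
  destruct C as [|c' C'].
  - exists [A]. split. constructor; auto. simpl. lra.
  - destruct IH as [As [H1 H2]]. intros; apply H; simpl; auto. congruence.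
    exists (A :: As). split. constructor; auto. simpl in *. lra.
Qed.

Lemma curve_good (C : list arc) :
  C <> [] ->
  (forall c, In c C -> exists k e, arc_ok c k e /\ k*e = 1) ->
  (forall i, (i < length C)%nat ->
    afun (nth i C dummy_arc) (ahi (nth i C dummy_arc)) =
    afun (nth (next_index C i) C dummy_arc) (alo (nth (next_index C i) C dummy_arc))) ->
  closed_pw_curve C /\ positively_oriented C /\ CAMC_with gamma6 C (-1).
Proof.
  intros Hne Hok Hj.
  assert (Hnx : forall i, (next_index C i < length C)%nat).
  { intro i. unfold next_index. apply Nat.mod_upper_bound. destruct C; [congruence| simpl; lia]. }
  split; [|split].
  - split; auto. split; auto. apply Forall_forall. intros c Hc.
    destruct (Hok c Hc) as [k [e [H _]]]. eapply arc_ok_wi; eauto.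
  - apply areas_exist; auto. intros c Hc. destruct (Hok c Hc) as [k [e [[Hk [He [Hf [Hab Hs]]]] Hke]]].
    destruct c as [[f a] b]. unfold afun, alo, ahi in *; simpl in *.
    apply (arc_area_pos f k a b Hk Hf Hab). intros x Hx. specialize (Hs x Hx).
    destruct Hk as [-> | ->]; destruct He as [-> | ->]; lra.
  - split.
    + intros c Hc t Ht. destruct (Hok c Hc) as [k [e [[Hk [He [Hf [Hab Hs]]]] Hke]]].
      rewrite (aniso_f (afun c) k e (alo c) (ahi c) t Hk Hf He Hs Ht). lra.
    + intros i Hi n1 n2 H1 H2.
      destruct (Hok _ (nth_In C dummy_arc Hi)) as [k [e [Ho Hke]]].
      destruct (Hok _ (nth_In C dummy_arc (Hnx i))) as [k' [e' [Ho' Hke']]].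
      rewrite (arc_ok_left _ _ _ _ Ho H1), (arc_ok_right _ _ _ _ Ho' H2).
      rewrite Hke, Hke', (Hj i Hi). auto.
Qed.

Lemma XX_hom l a b : XX (l*a) (l*b) = l^7 * XX a b. Proof. unfold XX; ring. Qed.
Lemma YY_hom l a b : YY (l*a) (l*b) = l^7 * YY a b. Proof. unfold YY; ring. Qed.

Lemma XY_th1 : XX cth1 sth1 + YY cth1 sth1 = 0.
Proof.
  unfold cth1, sth1. unfold Rdiv. rewrite (Rmult_comm (r5+1)), (Rmult_comm (r5-1)).
  rewrite XX_hom, YY_hom. rewrite <- Rmult_plus_distr_l.
  replace (XX (r5 + 1) (r5 - 1) + YY (r5 + 1) (r5 - 1)) with 0. ring.
  unfold XX, YY. ring_simplify. rewrite !r5ss. simpl. ring.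
Qed.

Definition Aq := XX cth1 sth1.
Lemma xi_th1 : xi theta1 = (Aq, -Aq).
Proof. rewrite xi_XY, cos_th1, sin_th1. unfold Aq. pose proof XY_th1. f_equal. lra. Qed.

Lemma YY_rho1 : YY cr sr = 0.
Proof.
  unfold YY. replace (-5 * cr ^ 6 + 6 * cr ^ 2 * sr ^ 4 + sr ^ 6) with
    (-5 * (cr^2)^3 + 6 * cr^2 * (sr^2)^2 + (sr^2)^3) by ring.
  rewrite cr_sq, sr_sq. replace (-5 * ((1 + r5) / 6) ^ 3 + 6 * ((1 + r5) / 6) * ((5 - r5) / 6) ^ 2 + ((5 - r5) / 6) ^ 3) with 0. ring.
  field_simplify. rewrite !r5ss. simpl. field.
Qed.

Definition pq := XX cr sr.
Lemma xi_rho1 : xi rho1 = (pq, 0).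
Proof. rewrite xi_XY, cos_rho1, sin_rho1. rewrite YY_rho1. auto. Qed.

Lemma xi_hn t n : xi (t + INR n * (PI/2)) = Nat.iter n rot_ccw (xi t).
Proof.
  induction n. simpl. rewrite Rmult_0_l, Rplus_0_r. auto.
  rewrite S_INR. replace (t + (INR n + 1) * (PI/2)) with ((t + INR n * (PI/2)) + PI/2) by ring.
  rewrite xi_half, IHn. simpl. auto.
Qed.

Ltac xi_val t0 n :=
  let H := fresh in
  assert (H := xi_hn t0 n); simpl INR in H;
  simpl Nat.iter in H.

Lemma xi_mth1 : xi (- theta1) = (Aq, Aq).
Proof. rewrite xi_neg, xi_th1. simpl. f_equal; ring. Qed.
Lemma xi_mrho1 : xi (- rho1) = (pq, 0).
Proof. rewrite xi_neg, xi_rho1. simpl. f_equal; ring. Qed.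

Lemma xi_shift_eq t0 n t : t = t0 + INR n * (PI/2) -> xi t = Nat.iter n rot_ccw (xi t0).
Proof. intros ->. apply xi_hn. Qed.

Ltac xsolve base n Hb :=
  match goal with |- xi ?t = _ =>
  rewrite (xi_shift_eq base n t); [ rewrite Hb; simpl; unfold rot_ccw; simpl; f_equal; ring
                                  | simpl INR; unfold theta2, theta3, theta4, theta5, theta6, theta7, theta8; try rewrite rho2_eq; field ] end.

Lemma xi_th2 : xi theta2 = (-Aq, Aq).  Proof. xsolve (- theta1) 1%nat xi_mth1. Qed.
Lemma xi_th3 : xi theta3 = (Aq, Aq).   Proof. xsolve theta1 1%nat xi_th1. Qed.
Lemma xi_th4 : xi theta4 = (-Aq, -Aq). Proof. xsolve (- theta1) 2%nat xi_mth1. Qed.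
Lemma xi_th5 : xi theta5 = (-Aq, Aq).  Proof. xsolve theta1 2%nat xi_th1. Qed.
Lemma xi_th6 : xi theta6 = (Aq, -Aq).  Proof. xsolve (- theta1) 3%nat xi_mth1. Qed.
Lemma xi_th7 : xi theta7 = (-Aq, -Aq). Proof. xsolve theta1 3%nat xi_th1. Qed.
Lemma xi_th8 : xi theta8 = (Aq, Aq).   Proof. unfold theta8. apply xi_mth1. Qed.
Lemma xi_th8p : xi (theta8 + 2*PI) = (Aq, Aq). Proof. rewrite xi_2pi. apply xi_th8. Qed.
Lemma xi_rho2 : xi rho2 = (0, pq).          Proof. xsolve (- rho1) 1%nat xi_mrho1. Qed.
Lemma xi_rho1h : xi (rho1 + PI/2) = (0, pq).  Proof. xsolve rho1 1%nat xi_rho1. Qed.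
Lemma xi_rho1p : xi (rho1 + PI) = (-pq, 0).  Proof. xsolve rho1 2%nat xi_rho1. Qed.
Lemma xi_rho13 : xi (rho1 + 3*PI/2) = (0, -pq).  Proof. xsolve rho1 3%nat xi_rho1. Qed.
Lemma xi_rho2h : xi (rho2 + PI/2) = (-pq, 0).  Proof. xsolve (- rho1) 2%nat xi_mrho1. Qed.
Lemma xi_rho2p : xi (rho2 + PI) = (0, -pq).  Proof. xsolve (- rho1) 3%nat xi_mrho1. Qed.
Lemma xi_rho23 : xi (rho2 + 3*PI/2) = (pq, 0).  Proof. xsolve (- rho1) 4%nat xi_mrho1. Qed.

Lemma lam_shift n t : lam (t + INR n * (PI/2)) = lam t.
Proof.
  induction n. simpl. rewrite Rmult_0_l, Rplus_0_r. auto.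
  rewrite S_INR. replace (t + (INR n + 1) * (PI/2)) with ((t + INR n * (PI/2)) + PI/2) by ring.
  rewrite lam_half; auto.
Qed.

Lemma lam_negI n t : - theta1 < t - INR n * (PI/2) < theta1 -> lam t < 0.
Proof. intro H. replace t with ((t - INR n * (PI/2)) + INR n * (PI/2)) by ring.
  rewrite lam_shift. apply lam_neg0; auto. Qed.
Lemma lam_posI n t : theta1 < t - INR n * (PI/2) < PI/2 - theta1 -> 0 < lam t.
Proof. intro H. replace t with ((t - INR n * (PI/2)) + INR n * (PI/2)) by ring.
  rewrite lam_shift. apply lam_pos0; auto. Qed.

Lemma fwd_ok a b e : kspec e -> a < b -> (forall x, a < x < b -> 0 < e * lam x) -> arc_ok (fwd a b) 1 e.
Proof.
  intros He Hab Hs. unfold arc_ok, fwd, afun, alo, ahi; simpl. split. left; auto. split; auto.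
  split. intro; rewrite Rmult_1_l; auto. split; auto. intros x Hx. rewrite Rmult_1_l; auto.
Qed.
Lemma bwd_ok a b e : kspec e -> a < b -> (forall x, a < x < b -> 0 < e * lam x) -> arc_ok (bwd a b) (-1) e.
Proof.
  intros He Hab Hs. unfold arc_ok, bwd, afun, alo, ahi; simpl. split. right; auto. split; auto.
  split. intro; f_equal; ring. split. lra. intros x Hx.
  replace (-1*x) with (-x) by ring. apply Hs. lra.
Qed.

Ltac angles := pose proof th1_pos; pose proof th1_PI4; pose proof rho1_bnd; pose proof rho2_eq; pose proof PI_RGT_0.

Ltac negI n := intros x Hx; let H := fresh in assert (H : lam x < 0);
  [apply (lam_negI n); simpl INR; unfold theta2, theta3, theta4, theta5, theta6, theta7, theta8 in *; angles; lra | lra].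
Ltac posI n := intros x Hx; let H := fresh in assert (H : 0 < lam x);
  [apply (lam_posI n); simpl INR; unfold theta2, theta3, theta4, theta5, theta6, theta7, theta8 in *; angles; lra | lra].
Ltac ltI := unfold theta2, theta3, theta4, theta5, theta6, theta7, theta8; angles; lra.

Lemma ok_C1 : forall c, In c Cgamma1 -> exists k e, arc_ok c k e /\ k*e = 1.
Proof.
  unfold Cgamma1. intros c Hc. simpl in Hc.
  repeat destruct Hc as [<-|Hc]; try contradiction; exists (-1), (-1); (split; [|ring]);
  (apply bwd_ok; [right; auto | ltI | ]).
  - negI 0%nat.
  - negI 1%nat.
  - negI 2%nat.
  - negI 3%nat.
Qed.

Ltac xvals := unfold afun, alo, ahi, bwd, fwd; simpl; rewrite ?Ropp_involutive; rewrite ?xi_th1, ?xi_th2, ?xi_th3, ?xi_th4, ?xi_th5, ?xi_th6, ?xi_th7,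
  ?xi_th8, ?xi_th8p, ?xi_rho1, ?xi_rho2, ?xi_rho1h, ?xi_rho1p, ?xi_rho13, ?xi_rho2h, ?xi_rho2p, ?xi_rho23, ?xi_mrho1; auto.

Lemma junc_C1 : forall i, (i < length Cgamma1)%nat ->
    afun (nth i Cgamma1 dummy_arc) (ahi (nth i Cgamma1 dummy_arc)) =
    afun (nth (next_index Cgamma1 i) Cgamma1 dummy_arc) (alo (nth (next_index Cgamma1 i) Cgamma1 dummy_arc)).
Proof.
  intros i Hi. simpl in Hi. unfold next_index. destruct i as [|[|[|[|i]]]]; try lia; simpl; xvals.
Qed.

Lemma C1_main : closed_pw_curve Cgamma1 /\ positively_oriented Cgamma1 /\ CAMC_with gamma6 Cgamma1 (-1).
Proof. apply curve_good. unfold Cgamma1; congruence. apply ok_C1. apply junc_C1. Qed.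

Lemma ok_C2 : forall c, In c Cgamma2 -> exists k e, arc_ok c k e /\ k*e = 1.
Proof.
  unfold Cgamma2. intros c Hc. simpl in Hc.
  repeat destruct Hc as [<-|Hc]; try contradiction; exists 1, 1; (split; [|ring]);
  (apply fwd_ok; [left; auto | ltI | ]).
  - posI 0%nat.
  - posI 2%nat.
Qed.
Lemma junc_C2 : forall i, (i < length Cgamma2)%nat ->
    afun (nth i Cgamma2 dummy_arc) (ahi (nth i Cgamma2 dummy_arc)) =
    afun (nth (next_index Cgamma2 i) Cgamma2 dummy_arc) (alo (nth (next_index Cgamma2 i) Cgamma2 dummy_arc)).
Proof.
  intros i Hi. simpl in Hi. unfold next_index. destruct i as [|[|i]]; try lia; simpl; xvals.
Qed.
Lemma C2_main : closed_pw_curve Cgamma2 /\ positively_oriented Cgamma2 /\ CAMC_with gamma6 Cgamma2 (-1).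
Proof. apply curve_good. unfold Cgamma2; congruence. apply ok_C2. apply junc_C2. Qed.

Lemma ok_C3 : forall c, In c Cgamma3 -> exists k e, arc_ok c k e /\ k*e = 1.
Proof.
  unfold Cgamma3. intros c Hc. simpl in Hc.
  repeat destruct Hc as [<-|Hc]; try contradiction.
  - exists (-1), (-1). split; [|ring]. apply bwd_ok; [right; auto | ltI | ]. negI 0%nat.
  - exists 1, 1. split; [|ring]. apply fwd_ok; [left; auto | ltI | ]. posI 1%nat.
  - exists 1, 1. split; [|ring]. apply fwd_ok; [left; auto | ltI | ]. posI 2%nat.
Qed.
Lemma junc_C3 : forall i, (i < length Cgamma3)%nat ->
    afun (nth i Cgamma3 dummy_arc) (ahi (nth i Cgamma3 dummy_arc)) =
    afun (nth (next_index Cgamma3 i) Cgamma3 dummy_arc) (alo (nth (next_index Cgamma3 i) Cgamma3 dummy_arc)).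
Proof.
  intros i Hi. simpl in Hi. unfold next_index. destruct i as [|[|[|i]]]; try lia; simpl; xvals.
Qed.
Lemma C3_main : closed_pw_curve Cgamma3 /\ positively_oriented Cgamma3 /\ CAMC_with gamma6 Cgamma3 (-1).
Proof. apply curve_good. unfold Cgamma3; congruence. apply ok_C3. apply junc_C3. Qed.

Lemma ok_C4 : forall c, In c Cgamma4 -> exists k e, arc_ok c k e /\ k*e = 1.
Proof.
  unfold Cgamma4. intros c Hc. simpl in Hc.
  repeat destruct Hc as [<-|Hc]; try contradiction; exists 1, 1; (split; [|ring]);
  (apply fwd_ok; [left; auto | ltI | ]).
  - posI 0%nat.
  - posI 3%nat.
  - posI 1%nat.
  - posI 0%nat.
  - posI 2%nat.
  - posI 1%nat.
  - posI 3%nat.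
  - posI 2%nat.
Qed.
Lemma junc_C4 : forall i, (i < length Cgamma4)%nat ->
    afun (nth i Cgamma4 dummy_arc) (ahi (nth i Cgamma4 dummy_arc)) =
    afun (nth (next_index Cgamma4 i) Cgamma4 dummy_arc) (alo (nth (next_index Cgamma4 i) Cgamma4 dummy_arc)).
Proof.
  intros i Hi. simpl in Hi. unfold next_index. destruct i as [|[|[|[|[|[|[|[|i]]]]]]]]; try lia; simpl; xvals.
Qed.
Lemma C4_main : closed_pw_curve Cgamma4 /\ positively_oriented Cgamma4 /\ CAMC_with gamma6 Cgamma4 (-1).
Proof. apply curve_good. unfold Cgamma4; congruence. apply ok_C4. apply junc_C4. Qed.

Lemma FTC_gen F h a b (pr : Riemann_integrable h a b) :
  (forall x, derivable_pt_lim F x (h x)) -> continuity h -> RiemannInt pr = F b - F a.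
Proof.
  intros HF Hc.
  set (d0 := fun x => exist (fun l => derivable_pt_lim F x l) (h x) (HF x) : derivable_pt F x).
  assert (Hc' : continuity (derive F d0)) by exact Hc.
  set (C := mkC1 Hc').
  exact (FTC_Riemann C pr).
Qed.

Definition Gf (c s : R) := 105/256*(4*c*s*(c^2-s^2))*(c^2+s^2)^2 + 135/2048*(8*c*s*(c^2-s^2)*((c^2-s^2)^2-4*c^2*s^2)).
Definition Ff (t : R) := 85/256 * t + Gf (cos t) (sin t).

Lemma circ_hom c s X Y : c^2+s^2 = 1 -> (c^2+s^2)*X = Y -> X = Y.
Proof. intros H1 H2. rewrite H1 in H2. lra. Qed.

Lemma dFf t : derivable_pt_lim Ff t (- lam t * gm t / 2).
Proof.
  let g := eval cbv beta delta [Gf] in (fun t => Gf (cos t) (sin t)) in tpify g HE.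
  assert (Hfun : Ff = plus_fct (fun t => 85/256 * t) (ev E)).
  { apply functional_extensionality; intro x; unfold Ff, plus_fct; rewrite <- HE; unfold Gf; reflexivity. }
  rewrite Hfun. replace (- lam t * gm t / 2) with (85/256 + ev (td E) t).
  - apply derivable_pt_lim_plus. apply dlin. apply td_ok.
  - subst E. simpl. unfold lam, gm. pose proof (cs1 t) as Hcs.
    set (c := cos t) in *. set (s := sin t) in *.
    replace (85/256) with (85/256*(c^2+s^2)^4) by (rewrite Hcs; ring).
    replace (45 * c ^ 2 * s ^ 2 - 5) with (45 * c ^ 2 * s ^ 2 - 5*(c^2+s^2)^2) by (rewrite Hcs; ring).
    first [apply (circ_hom c s) | symmetry; apply (circ_hom c s)]; auto.
    field.
Qed.

Lemma gm_neg t : gm (- t) = gm t.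
Proof. unfold gm. rewrite cos_neg, sin_neg. ring. Qed.

Definition fb := fun t => xi (- t).
Lemma fb_spec : forall t, fb t = xi (-1 * t).
Proof. intro t. unfold fb. f_equal. ring. Qed.

Lemma integ_fb t : integ fb t = - lam t * gm t / 2.
Proof. rewrite (integ_f fb (-1) t fb_spec). replace (-1*t) with (-t) by ring. rewrite lam_neg, gm_neg. field. Qed.

Lemma cont_integ_fb : continuity (integ fb).
Proof. intro x. rewrite (integ_fun fb (-1) fb_spec). apply cont_integ_expl. Qed.

Lemma Gf_odd c s : Gf c (- s) = - Gf c s.
Proof. unfold Gf. field. Qed.

Lemma Gf_pos : 0 < Gf cr sr.
Proof.
  replace (Gf cr sr) with (cr*sr*(cr^2-sr^2)*(105/64*(cr^2+sr^2)^2 + 135/256*((cr^2-sr^2)^2-4*(cr^2*sr^2))))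
    by (unfold Gf; field).
  rewrite cr_sq, sr_sq. pose proof cr_pos. pose proof sr_pos. pose proof r5_bnd.
  apply Rmult_lt_0_compat. apply Rmult_lt_0_compat. nra. lra.
  nra.
Qed.

Lemma C5_area : positively_oriented Cgamma5.
Proof.
  assert (Hc : forall a b, a <= b -> Riemann_integrable (integ fb) a b).
  { intros a b Hab. apply continuity_implies_RiemannInt; auto. intros; apply cont_integ_fb. }
  angles. unfold theta8 in *.
  pose proof (Hc (-rho1) (-theta1) ltac:(lra)) as p1.
  pose proof (Hc (-theta1) (- - theta1) ltac:(lra)) as p2.
  pose proof (Hc (- - theta1) (- - rho1) ltac:(lra)) as p3.
  pose proof (Hc (-rho1) (- - theta1) ltac:(lra)) as p12.
  pose proof (Hc (-rho1) (- - rho1) ltac:(lra)) as p123.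
  exists [RiemannInt p1; RiemannInt p2; RiemannInt p3]. split.
  - repeat constructor; eexists; reflexivity.
  - simpl. rewrite Rplus_0_r, <- Rplus_assoc, (RiemannInt_P26 p1 p2 p12), (RiemannInt_P26 p12 p3 p123).
    rewrite (FTC_gen Ff (integ fb) (-rho1) (- - rho1) p123).
    + rewrite Ropp_involutive. unfold Ff. rewrite cos_neg, sin_neg, Gf_odd, cos_rho1, sin_rho1.
      pose proof Gf_pos. lra.
    + intro x. rewrite integ_fb. apply dFf.
    + apply cont_integ_fb.
Qed.

Lemma ok5_1 : arc_ok (bwd theta1 rho1) (-1) 1.
Proof. apply bwd_ok; [left; auto | angles; lra | ]. posI 0%nat. Qed.
Lemma ok5_2 : arc_ok (bwd theta8 theta1) (-1) (-1).
Proof. apply bwd_ok; [right; auto | unfold theta8; angles; lra | ]. negI 0%nat. Qed.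
Lemma ok5_3 : arc_ok (bwd (- rho1) theta8) (-1) 1.
Proof. apply bwd_ok; [left; auto | unfold theta8; angles; lra | ].
  intros x Hx. rewrite <- lam_neg. assert (0 < lam (-x)). apply (lam_posI 0). simpl INR.
  unfold theta8 in *; angles; lra. lra. Qed.

Lemma C5_closed : closed_pw_curve Cgamma5.
Proof.
  split. unfold Cgamma5; congruence. split.
  - unfold Cgamma5. constructor. eapply arc_ok_wi, ok5_1. constructor. eapply arc_ok_wi, ok5_2.
    constructor. eapply arc_ok_wi, ok5_3. constructor.
  - intros i Hi. simpl in Hi. unfold next_index. destruct i as [|[|[|i]]]; try lia; simpl; xvals.
Qed.

Lemma C5_curv_mid th : theta8 < th < theta1 -> aniso_curv gamma6 (fun t => xi (- t)) (- th) = -1.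
Proof.
  intro H. destruct ok5_2 as [Hk [He [Hf [Hab Hs]]]]. unfold bwd, afun, alo, ahi in *; simpl in *.
  rewrite (aniso_f _ (-1) (-1) (- theta1) (- theta8) (- th) Hk Hf He Hs). ring. unfold theta8 in *. lra.
Qed.

Lemma C5_curv_side th : (- rho1 < th < theta8 \/ theta1 < th < rho1) ->
  aniso_curv gamma6 (fun t => xi (- t)) (- th) = 1.
Proof.
  intros [H|H].
  - destruct ok5_3 as [Hk [He [Hf [Hab Hs]]]]. unfold bwd, afun, alo, ahi in *; simpl in *.
    rewrite (aniso_f _ (-1) 1 (- theta8) (- - rho1) (- th) Hk Hf He Hs). ring. lra.
  - destruct ok5_1 as [Hk [He [Hf [Hab Hs]]]]. unfold bwd, afun, alo, ahi in *; simpl in *.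
    rewrite (aniso_f _ (-1) 1 (- rho1) (- theta1) (- th) Hk Hf He Hs). ring. lra.
Qed.

Lemma C5_notCAMC : ~ CAMC gamma6 Cgamma5.
Proof.
  intros [L [H1 _]].
  angles.
  assert (A1 : aniso_curv gamma6 (fun t => xi (- t)) (- 0) = -1) by (apply C5_curv_mid; unfold theta8; lra).
  rewrite Ropp_0 in A1.
  pose proof (H1 (bwd theta8 theta1) ltac:(simpl; auto) 0 ltac:(unfold bwd, alo, ahi; simpl; unfold theta8; lra)) as E1.
  assert (A2 : aniso_curv gamma6 (fun t => xi (- t)) (- ((theta1 + rho1)/2)) = 1) by (apply C5_curv_side; right; lra).
  pose proof (H1 (bwd theta1 rho1) ltac:(simpl; auto) (- ((theta1 + rho1)/2)) ltac:(unfold bwd, alo, ahi; simpl; lra)) as E2.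
  unfold afun, bwd in E1, E2; simpl in E1, E2. lra.
Qed.

Lemma ci_in c C X : In c C -> (exists t, alo c <= t <= ahi c /\ X = afun c t) -> curve_image C X.
Proof. intros H1 H2. exists c. split; auto. Qed.

Ltac pick_leaf := unfold Icc; lra.
Ltac pick := first [ pick_leaf | (left; pick_leaf) | (right; pick) ].

Ltac img_fwd_dir :=
  let c := fresh "c" in let Hin := fresh in let t := fresh "t" in let Ht := fresh in
  intros [c [Hin [t [Ht ->]]]]; simpl in Hin;
  repeat (destruct Hin as [<-|Hin]); try contradiction;
  unfold fwd, bwd, alo, ahi, afun in *; simpl in *;
  first [ exists t; split; [pick | reflexivity] | exists (- t); split; [pick | reflexivity] ].

Ltac use_fwd a b th := apply (ci_in (fwd a b)); [simpl; tauto | exists th; unfold fwd, alo, ahi, afun; simpl; split; [unfold Icc in *; lra | reflexivity]].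
Ltac use_bwd a b th := apply (ci_in (bwd a b)); [simpl; tauto | exists (- th); unfold bwd, alo, ahi, afun; simpl; split; [unfold Icc in *; lra | rewrite Ropp_involutive; reflexivity]].

Lemma img_C1 X : curve_image Cgamma1 X <->
     xi_image (fun t => Icc theta2 theta3 t \/ Icc theta4 theta5 t \/
                        Icc theta6 theta7 t \/ Icc theta8 theta1 t) X.
Proof.
  split.
  - unfold Cgamma1. img_fwd_dir.
  - intros [th [Hth ->]]. unfold Cgamma1.
    destruct Hth as [H|[H|[H|H]]].
    + use_bwd theta2 theta3 th.
    + use_bwd theta4 theta5 th.
    + use_bwd theta6 theta7 th.
    + use_bwd theta8 theta1 th.
Qed.

Lemma img_C2 X : curve_image Cgamma2 X <->
     xi_image (fun t => Icc theta1 theta2 t \/ Icc theta5 theta6 t) X.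
Proof.
  split.
  - unfold Cgamma2. img_fwd_dir.
  - intros [th [Hth ->]]. unfold Cgamma2.
    destruct Hth as [H|H].
    + use_fwd theta1 theta2 th.
    + use_fwd theta5 theta6 th.
Qed.

Lemma img_C3 X : curve_image Cgamma3 X <->
     xi_image (fun t => Icc theta8 theta1 t \/ Icc theta3 (rho2 + PI / 2) t \/
                        Icc (rho1 + PI) theta6 t) X.
Proof.
  split.
  - unfold Cgamma3. img_fwd_dir.
  - intros [th [Hth ->]]. unfold Cgamma3.
    destruct Hth as [H|[H|H]].
    + use_bwd theta8 theta1 th.
    + use_fwd theta3 (rho2 + PI/2) th.
    + use_fwd (rho1 + PI) theta6 th.
Qed.

Lemma img_C4 X : curve_image Cgamma4 X <->
     xi_image (fun t => Icc theta1 rho1 t \/ Icc rho2 theta2 t \/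
                        Icc theta3 (rho1 + PI / 2) t \/ Icc (rho2 + PI / 2) theta4 t \/
                        Icc theta5 (rho1 + PI) t \/ Icc (rho2 + PI) theta6 t \/
                        Icc theta7 (rho1 + 3 * PI / 2) t \/
                        Icc (rho2 + 3 * PI / 2) (theta8 + 2 * PI) t) X.
Proof.
  split.
  - unfold Cgamma4. img_fwd_dir.
  - intros [th [Hth ->]]. unfold Cgamma4.
    destruct Hth as [H|[H|[H|[H|[H|[H|[H|H]]]]]]].
    + use_fwd theta1 rho1 th.
    + use_fwd rho2 theta2 th.
    + use_fwd theta3 (rho1 + PI/2) th.
    + use_fwd (rho2 + PI/2) theta4 th.
    + use_fwd theta5 (rho1 + PI) th.
    + use_fwd (rho2 + PI) theta6 th.
    + use_fwd theta7 (rho1 + 3*PI/2) th.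
    + use_fwd (rho2 + 3*PI/2) (theta8 + 2*PI) th.
Qed.

Lemma img_C5 X : curve_image Cgamma5 X <-> xi_image (Icc (- rho1) rho1) X.
Proof.
  split.
  - unfold Cgamma5. intros [c [Hin [t [Ht ->]]]]; simpl in Hin.
    angles. unfold theta8 in *.
    repeat (destruct Hin as [<-|Hin]); try contradiction;
    unfold bwd, alo, ahi, afun in *; simpl in *; exists (-t); (split; [unfold Icc; lra | reflexivity]).
  - intros [th [Hth ->]]. unfold Cgamma5. unfold Icc in Hth. angles.
    destruct (Rle_dec th theta8).
    + use_bwd (- rho1) theta8 th.
    + destruct (Rle_dec th theta1).
      * use_bwd theta8 theta1 th.
      * use_bwd theta1 rho1 th.
Qed.

Definition Bd := Wulff_body gamma6.

Lemma Bd_rot X : Bd X -> Bd (rot_ccw X).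
Proof.
  intros H [a b] Hu. unfold unit_vec, dot in *; simpl in *.
  specialize (H (b, -a)). unfold unit_vec, dot, gamma6 in *; simpl in *.
  assert (b*b + -a*-a = 1) by lra. specialize (H H0).
  destruct X as [x y]; simpl in *. nra.
Qed.

Lemma Bd_rot_inv X : Bd (rot_ccw X) -> Bd X.
Proof.
  intro H. apply Bd_rot, Bd_rot, Bd_rot in H. destruct X as [x y]; unfold rot_ccw in H; simpl in H.
  replace (- - x) with x in H by ring. replace (- - y) with y in H by ring. auto.
Qed.

Lemma Bd_iter n X : Bd X <-> Bd (Nat.iter n rot_ccw X).
Proof.
  induction n; simpl. tauto. split; intro H.
  - apply Bd_rot, IHn; auto.
  - apply IHn, Bd_rot_inv; auto.
Qed.

Lemma Bd_refl x y : Bd (x, y) -> Bd (x, - y).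
Proof.
  intros H [a b] Hu. specialize (H (a, -b)). unfold unit_vec, dot, gamma6 in *; simpl in *.
  assert (a*a + -b*-b = 1) by lra. specialize (H H0). nra.
Qed.

Lemma dot_xi_e t : dot (xi t) (cos t, sin t) = gm t.
Proof. rewrite xi_XY. unfold dot, gm, XX, YY; simpl. pose proof (cs1 t).
  transitivity ((cos t^2 + sin t^2) * (cos t ^6 + sin t ^6)); [ring|]. rewrite H; ring. Qed.

Lemma gamma6_e t : gamma6 (cos t, sin t) = gm t.
Proof. reflexivity. Qed.

Lemma unit_e t : unit_vec (cos t, sin t).
Proof. unfold unit_vec, dot; simpl. pose proof (cs1 t). nra. Qed.

Lemma pq_val : pq = cr * (2*r5 - 4).
Proof.
  unfold pq, XX. f_equal.
  replace (cr ^ 6 + 6 * cr ^ 4 * sr ^ 2 - 5 * sr ^ 6) with ((cr^2)^3 + 6*(cr^2)^2*sr^2 - 5*(sr^2)^3) by ring.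
  rewrite cr_sq, sr_sq. field_simplify. rewrite !r5ss. simpl. field.
Qed.

Lemma crss n : cr ^ (S (S n)) = (1+r5)/6 * cr ^ n.
Proof. rewrite <- cr_sq. simpl. ring. Qed.

Lemma quartic a : pq * a <= 3*a^4 - 3*a^2 + 1.
Proof.
  rewrite pq_val. pose proof r5_bnd.
  assert (E : 3*a^4 - 3*a^2 + 1 - cr*(2*r5-4)*a = (a - cr)^2 * (3*(a+cr)^2 + (r5 - 2))).
  { ring_simplify. rewrite ?crss. ring_simplify. rewrite ?crss. ring_simplify. field_simplify. rewrite ?r5ss. field. }
  assert (0 <= (a - cr)^2 * (3*(a+cr)^2 + (r5 - 2))).
  { apply Rmult_le_pos. apply pow2_ge_0. pose proof (pow2_ge_0 (a+cr)). lra. }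
  lra.
Qed.

Lemma ep1 a b : a*a + b*b = 1 -> pq * a + 0 * b <= a^6 + b^6.
Proof. intro H. pose proof (quartic a). replace (b^6) with ((b*b)^3) by ring. replace (b*b) with (1 - a*a) by lra.
  nra. Qed.
Lemma ep2 a b : a*a + b*b = 1 -> 0 * a + pq * b <= a^6 + b^6.
Proof. intro H. pose proof (quartic b). replace (a^6) with ((a*a)^3) by ring. replace (a*a) with (1 - b*b) by lra.
  nra. Qed.

Lemma dg a b k t : derivable_pt_lim (fun p => fst (xi p) * a + snd (xi p) * b - k) t
   (lam t * (- sin t * a + cos t * b)).
Proof.
  replace (lam t * (- sin t * a + cos t * b)) with ((- sin t * lam t) * a + (cos t * lam t) * b - 0) by ring.
  apply (derivable_pt_lim_minus (fun p => fst (xi p) * a + snd (xi p) * b) (fun _ => k)).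
  2: apply derivable_pt_lim_const.
  apply (derivable_pt_lim_plus (fun p => fst (xi p) * a) (fun p => snd (xi p) * b)).
  - replace (- sin t * lam t * a) with (- sin t * lam t * a + fst (xi t) * 0) by ring.
    apply (derivable_pt_lim_mult (fun p => fst (xi p)) (fun _ => a)). apply dxi_x. apply derivable_pt_lim_const.
  - replace (cos t * lam t * b) with (cos t * lam t * b + snd (xi t) * 0) by ring.
    apply (derivable_pt_lim_mult (fun p => snd (xi p)) (fun _ => b)). apply dxi_y. apply derivable_pt_lim_const.
Qed.

Lemma crit_le a b t : a*a + b*b = 1 -> - sin t * a + cos t * b = 0 ->
  fst (xi t) * a + snd (xi t) * b - (a^6 + b^6) <= 0.
Proof.
  intros Hab Hq. rewrite xi_XY. simpl. pose proof (cs1 t) as Hcs. pose proof (gm_pos t) as Hg. unfold gm in Hg.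
  set (c := cos t) in *. set (s := sin t) in *.
  set (p := a*c + b*s).
  assert (Ha : a = p*c).
  { transitivity (a*(c^2+s^2)). rewrite Hcs; ring. transitivity (p*c - s*(- s * a + c * b)). unfold p; ring. rewrite Hq; ring. }
  assert (Hb : b = p*s).
  { transitivity (b*(c^2+s^2)). rewrite Hcs; ring. transitivity (p*s + c*(- s * a + c * b)). unfold p; ring. rewrite Hq; ring. }
  assert (Hp : p*p = 1).
  { clearbody p. rewrite <- Hab. rewrite Ha, Hb. transitivity (p*p*(c^2+s^2)); [rewrite Hcs; ring | ring]. }
  clearbody p. rewrite Ha, Hb.
  match goal with |- ?L <= 0 => replace L with (p * ((c^2+s^2)*(c^6+s^6)) - (p*p)^3 * (c^6+s^6)) by (unfold XX, YY; ring) end.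
  rewrite Hp, Hcs. assert (p <= 1) by nra. set (G := c^6+s^6) in *. nra.
Qed.

Lemma th1_lt_rho2 : theta1 < rho2 /\ rho2 < PI/2 - theta1.
Proof. angles. lra. Qed.

Lemma Bd_base th : rho1 <= th <= rho2 -> Bd (xi th).
Proof.
  intros Hth [a b] Hu. unfold unit_vec, dot in Hu; simpl in Hu.
  set (g := fun p => fst (xi p) * a + snd (xi p) * b - gamma6 (a,b)).
  assert (Hd : forall t, derivable_pt_lim g t (lam t * (- sin t * a + cos t * b))) by (intro; apply dg).
  assert (Hc : forall t, continuity_pt g t).
  { intro t. apply derivable_continuous_pt. eexists. apply Hd. }
  angles.
  destruct (continuity_ab_maj g rho1 rho2 ltac:(lra) (fun c _ => Hc c)) as [M [HM HM2]].
  assert (g M <= 0).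
  { destruct (Req_dec M rho1) as [E|E].
    - subst M. unfold g. rewrite xi_rho1. simpl. unfold gamma6; simpl. pose proof (ep1 a b Hu). lra.
    - destruct (Req_dec M rho2) as [E2|E2].
      + subst M. unfold g. rewrite xi_rho2. simpl. unfold gamma6; simpl. pose proof (ep2 a b Hu). lra.
      + assert (Hint : rho1 < M < rho2) by lra.
        assert (pr : derivable_pt g M) by (eexists; apply Hd).
        pose proof (deriv_maximum g rho1 rho2 M pr ltac:(lra) ltac:(lra) (fun x H1 H2 => HM x ltac:(lra))) as D.
        rewrite (derive_pt_eq_0 _ _ _ pr (Hd M)) in D.
        assert (0 < lam M) by (apply lam_pos0; lra).
        assert (Hq : - sin M * a + cos M * b = 0).
        { destruct (Rmult_integral _ _ D); auto. lra. }
        unfold g, gamma6; simpl. apply crit_le; auto. }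
  assert (Hth2 := HM th Hth). unfold g in Hth2, H4. assert (E : dot (xi th) (a,b) = fst (xi th) * a + snd (xi th) * b) by reflexivity. rewrite E. lra.
Qed.

Lemma outside_pt X nu : dot X nu = gamma6 nu -> 0 < gamma6 nu -> unit_vec nu ->
  forall eps, 0 < eps -> exists Y, ~ Bd Y /\ pdist X Y < eps.
Proof.
  intros Hd Hg Hu eps He. destruct X as [x y].
  set (d := eps / (2 * (Rabs x + Rabs y + 1))).
  assert (Hpos : 0 < Rabs x + Rabs y + 1) by (pose proof (Rabs_pos x); pose proof (Rabs_pos y); lra).
  assert (Hd0 : 0 < d) by (unfold d; apply Rdiv_lt_0_compat; lra).
  exists ((1+d)*x, (1+d)*y). split.
  - intro HB. specialize (HB nu Hu). unfold dot in *; simpl in *. nra.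
  - eapply Rle_lt_trans. apply pdist_le. simpl.
    replace (x - (1+d)*x) with (-d * x) by ring. replace (y - (1+d)*y) with (-d * y) by ring.
    rewrite !Rabs_mult, Rabs_Ropp, (Rabs_right d) by lra.
    assert (d * (Rabs x + Rabs y + 1) = eps/2) by (unfold d; field; lra).
    pose proof (Rabs_pos x); pose proof (Rabs_pos y). nra.
Qed.

Lemma Bd_xi_image X : xi_image (fun t => Icc rho1 rho2 t \/ Icc (rho1 + PI / 2) (rho2 + PI / 2) t \/
                        Icc (rho1 + PI) (rho2 + PI) t \/
                        Icc (rho1 + 3 * PI / 2) (rho2 + 3 * PI / 2) t) X -> Wulff_shape gamma6 X.
Proof.
  intros [th [Hth ->]].
  assert (HB : Bd (xi th)).
  { unfold Icc in Hth. destruct Hth as [H|[H|[H|H]]].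
    - apply Bd_base; auto.
    - rewrite (xi_shift_eq (th - PI/2) 1 th) by (simpl; ring). apply Bd_iter, Bd_base. lra.
    - rewrite (xi_shift_eq (th - PI) 2 th) by (simpl; field). apply Bd_iter, Bd_base. lra.
    - rewrite (xi_shift_eq (th - 3*PI/2) 3 th) by (simpl; field). apply Bd_iter, Bd_base. lra. }
  intros eps He. split.
  - exists (xi th). split; auto. rewrite pdist_self; auto.
  - apply (outside_pt _ (cos th, sin th)); auto.
    + rewrite dot_xi_e. auto.
    + apply gm_pos.
    + apply unit_e.
Qed.

Lemma pdist_sym X Y : pdist X Y = pdist Y X.
Proof. unfold pdist, pnorm, dot, padd, pscal; simpl. f_equal. ring. Qed.

Lemma cs_dot X Y nu : unit_vec nu -> dot X nu - dot Y nu <= pdist X Y.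
Proof.
  intro Hu. destruct X as [x1 x2], Y as [y1 y2], nu as [a b]. unfold unit_vec, pdist, pnorm, dot, padd, pscal in *; simpl in *.
  pose proof (sqrt_cauchy (x1 + -1*y1) (x2 + -1*y2) a b). unfold Rsqr in H.
  replace (a*a+b*b) with 1 in H by lra. rewrite sqrt_1, Rmult_1_r in H. lra.
Qed.

Lemma Bd_closed X : Wulff_shape gamma6 X -> Bd X.
Proof.
  intros HW nu Hu. destruct (Rle_dec (dot X nu) (gamma6 nu)) as [H|H]; auto. exfalso.
  destruct (HW (dot X nu - gamma6 nu) ltac:(lra)) as [[Y [HY HXY]] _].
  specialize (HY nu Hu). pose proof (cs_dot X Y nu Hu). lra.
Qed.

Lemma polar a b : unit_vec (a, b) -> exists p, 0 <= p <= 2*PI /\ a = cos p /\ b = sin p.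
Proof.
  intro Hu. unfold unit_vec, dot in Hu; simpl in Hu.
  assert (Ha : -1 <= a <= 1) by nra.
  pose proof (acos_bound a). pose proof PI_RGT_0.
  assert (Hs : sqrt (1 - a²) = Rabs b).
  { rewrite <- sqrt_Rsqr_abs. f_equal. unfold Rsqr. lra. }
  destruct (Rle_dec 0 b).
  - exists (acos a). split. lra. split. rewrite cos_acos; auto. rewrite sin_acos, Hs, Rabs_right; auto; lra.
  - exists (2*PI - acos a). split. lra. split.
    + rewrite cos_minus, cos_2PI, sin_2PI, cos_acos; auto. ring.
    + rewrite sin_minus, cos_2PI, sin_2PI, sin_acos, Hs, Rabs_left; auto; lra.
Qed.

Lemma cont_G X p : continuity_pt (fun p => gm p - dot X (cos p, sin p)) p.
Proof.
  destruct X as [x y]. unfold gm, dot; simpl.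
  tpify (fun p => cos p ^ 6 + sin p ^ 6 - (x * cos p + y * sin p)) HE. apply (cont_tp _ _ HE).
Qed.

Lemma touch X : Wulff_shape gamma6 X -> exists p, dot X (cos p, sin p) = gm p.
Proof.
  intro HW. pose proof (Bd_closed X HW) as HB.
  apply NNPP. intro Hn.
  assert (Hlt : forall p, dot X (cos p, sin p) < gm p).
  { intro p. specialize (HB _ (unit_e p)). rewrite gamma6_e in HB. destruct HB; auto.
    exfalso; apply Hn; exists p; auto. }
  pose proof PI_RGT_0.
  destruct (continuity_ab_min (fun p => gm p - dot X (cos p, sin p)) 0 (2*PI) ltac:(lra)
     (fun c _ => cont_G X c)) as [mx [Hmx _]].
  set (m := gm mx - dot X (cos mx, sin mx)).
  assert (Hm : 0 < m) by (unfold m; pose proof (Hlt mx); lra).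
  destruct (HW m Hm) as [_ [Y [HY HXY]]].
  apply HY. intros [a b] Hu. destruct (polar a b Hu) as [p [Hp [-> ->]]].
  pose proof (Hmx p Hp). simpl in H0. pose proof (cs_dot Y X _ Hu). rewrite pdist_sym in H1.
  rewrite gamma6_e. fold m in H0. lra.
Qed.

Lemma tangency X p : Bd X -> dot X (cos p, sin p) = gm p -> X = xi p.
Proof.
  intros HB Ht. destruct X as [x y]. unfold dot in Ht; simpl in Ht.
  tpify (fun p => cos p ^ 6 + sin p ^ 6 - (x * cos p + y * sin p)) HE.
  set (G := fun p => cos p ^ 6 + sin p ^ 6 - (x * cos p + y * sin p)) in *.
  assert (Hmin : forall q, G p <= G q).
  { intro q. unfold G. specialize (HB _ (unit_e q)). rewrite gamma6_e in HB. unfold dot, gm in *; simpl in *. lra. }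
  assert (pr : derivable_pt G p) by (eexists; apply (dlim_tp _ _ HE)).
  pose proof (deriv_minimum G (p-1) (p+1) p pr ltac:(lra) ltac:(lra) (fun q _ _ => Hmin q)) as D.
  rewrite (derive_pt_eq_0 _ _ _ pr (dlim_tp _ _ HE p)) in D.
  subst E. simpl in D. rewrite xi_XY. unfold gm in Ht.
  pose proof (cs1 p) as Hcs. set (c := cos p) in *. set (s := sin p) in *.
  assert (D' : x*s - y*c = 6*c^5*s - 6*s^5*c).
  { match type of D with ?L = 0 => transitivity (x*s - y*c - L); [rewrite D; ring | ring] end. }
  f_equal.
  - transitivity (c*(x*c+y*s) + s*(x*s - y*c)). transitivity (x*(c^2+s^2)). rewrite Hcs; ring. ring.
    rewrite Ht, D'. unfold XX. ring.
  - transitivity (s*(x*c+y*s) - c*(x*s - y*c)). transitivity (y*(c^2+s^2)). rewrite Hcs; ring. ring.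
    rewrite Ht, D'. unfold YY. ring.
Qed.

Lemma not_Bd_pos p : 0 < p < rho1 -> ~ Bd (xi p).
Proof.
  intros Hp HB. angles.
  specialize (HB (cos p, - sin p)).
  assert (Hu : unit_vec (cos p, - sin p)) by (unfold unit_vec, dot; simpl; pose proof (cs1 p); nra).
  specialize (HB Hu). rewrite xi_XY in HB. unfold dot, gamma6 in HB; simpl in HB.
  assert (Hc : cr < cos p) by (rewrite <- cos_rho1; apply cos_decreasing_1; lra).
  assert (Hs : 0 < sin p) by (apply sin_gt_0; lra).
  pose proof (cs1 p) as Hcs. pose proof cr_sq. pose proof cr_pos. pose proof r5_bnd. pose proof r5_2.
  set (c := cos p) in *. set (s := sin p) in *.
  assert (HQ : -5*c^6 + 6*c^2*s^4 + s^6 < 0).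
  { replace (s^4) with ((s^2)^2) by ring. replace (s^6) with ((s^2)^3) by ring.
    replace (s^2) with (1 - c^2) by lra.
    replace (-5 * c ^ 6 + 6 * c ^ 2 * (1 - c ^ 2) ^ 2 + (1 - c ^ 2) ^ 3) with (-9*(c^2)^2 + 3*c^2 + 1) by ring.
    assert (c^2 > (1+r5)/6) by nra. set (w := c^2) in *. nra. }
  assert (E : XX c s * c + YY c s * - s = (c^6 + s^6) - 2*s^2*(-5*c^6 + 6*c^2*s^4 + s^6)).
  { transitivity ((c^2+s^2)*(c^6+s^6) - 2*s^2*(-5*c^6 + 6*c^2*s^4 + s^6)). unfold XX, YY; ring. rewrite Hcs; ring. }
  replace (- s) with (-1 * s) in HB by ring. replace (XX c s * c + YY c s * (-1*s)) with (XX c s * c + YY c s * - s) in HB by ring.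
  rewrite E in HB. replace ((-1*s)^6) with (s^6) in HB by ring.
  assert (0 < s^2) by nra. nra.
Qed.

Lemma not_Bd_0 : ~ Bd (xi 0).
Proof.
  intro HB. rewrite xi_XY, cos_0, sin_0 in HB. unfold XX, YY in HB.
  set (h := sqrt 2 / 2). pose proof r2_bnd. pose proof (sqrt_sqrt 2 ltac:(lra)).
  assert (Hh : h*h = 1/2) by (unfold h; replace (sqrt 2 / 2 * (sqrt 2 / 2)) with (sqrt 2 * sqrt 2 / 4) by field; rewrite H0; field).
  specialize (HB (h, h)). unfold unit_vec, dot, gamma6 in HB; cbn [fst snd] in HB.
  assert (h*h+h*h = 1) by lra. specialize (HB H1).
  assert (h^6 = 1/8) by (replace (h^6) with ((h*h)^3) by ring; rewrite Hh; field). rewrite H2 in HB.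
  assert (0.7 < h) by (unfold h; lra). nra.
Qed.

Lemma not_Bd_small p : - rho1 < p < rho1 -> ~ Bd (xi p).
Proof.
  intros Hp HB. destruct (Rtotal_order p 0) as [H|[H|H]].
  - apply (not_Bd_pos (-p)). lra. rewrite xi_neg. destruct (xi p) as [x y]. simpl. apply Bd_refl. auto.
  - subst. apply not_Bd_0; auto.
  - apply (not_Bd_pos p). lra. auto.
Qed.

From Stdlib Require Import ZArith.

Lemma xi_nper n t : xi (t + INR n * (2*PI)) = xi t.
Proof.
  induction n. simpl. f_equal. ring.
  rewrite S_INR. replace (t + (INR n + 1) * (2*PI)) with ((t + INR n * (2*PI)) + 2*PI) by ring.
  rewrite xi_2pi. auto.
Qed.

Lemma xi_zper q t : xi (t + IZR q * (2*PI)) = xi t.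
Proof.
  destruct (Z_le_gt_dec 0 q).
  - rewrite <- (Z2Nat.id q) by auto. rewrite <- INR_IZR_INZ. apply xi_nper.
  - replace q with (- Z.of_nat (Z.to_nat (- q)))%Z by (rewrite Z2Nat.id; lia).
    rewrite opp_IZR, <- INR_IZR_INZ.
    rewrite <- (xi_nper (Z.to_nat (-q)) (t + - INR (Z.to_nat (- q)) * (2 * PI))). f_equal. ring.
Qed.

Definition S4 := (fun t => Icc rho1 rho2 t \/ Icc (rho1 + PI / 2) (rho2 + PI / 2) t \/
                        Icc (rho1 + PI) (rho2 + PI) t \/
                        Icc (rho1 + 3 * PI / 2) (rho2 + 3 * PI / 2) t).

Lemma reduce p : Bd (xi p) -> xi_image S4 (xi p).
Proof.
  intro HB. angles.
  set (r := p / (PI/2) + 1/2).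
  set (k := (up r - 1)%Z).
  destruct (archimed r) as [Hr1 Hr2].
  assert (Hk : IZR k <= r < IZR k + 1) by (unfold k; rewrite minus_IZR; simpl; lra).
  set (psi := p - IZR k * (PI/2)).
  assert (Hpsi : - (PI/4) <= psi < PI/4).
  { unfold psi. unfold r in Hk. destruct Hk as [Hk1 Hk2].
    assert (IZR k * (PI/2) <= p + PI/4).
    { apply (Rmult_le_compat_r (PI/2)) in Hk1; [|lra]. replace ((p / (PI / 2) + 1 / 2) * (PI / 2)) with (p + PI/4) in Hk1 by (field; lra). lra. }
    assert (p + PI/4 < (IZR k + 1) * (PI/2)).
    { apply (Rmult_lt_compat_r (PI/2)) in Hk2; [|lra]. replace ((p / (PI / 2) + 1 / 2) * (PI / 2)) with (p + PI/4) in Hk2 by (field; lra). lra. }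
    lra. }
  pose proof (Z.div_mod k 4 ltac:(lia)) as Hdm.
  pose proof (Z.mod_pos_bound k 4 ltac:(lia)) as Hmb.
  set (q := (k / 4)%Z) in *. set (j := (k mod 4)%Z) in *.
  assert (Hp : p = (psi + IZR j * (PI/2)) + IZR q * (2*PI)).
  { unfold psi. rewrite Hdm at 1. rewrite plus_IZR, mult_IZR. simpl. field. }
  rewrite Hp, xi_zper. rewrite Hp, xi_zper in HB.
  assert (Hj : j = 0%Z \/ j = 1%Z \/ j = 2%Z \/ j = 3%Z) by lia.
  clearbody psi j q. clear Hp Hdm.
  destruct Hj as [-> | [-> | [-> | ->]]]; simpl IZR in *.
  - replace (psi + 0 * (PI/2)) with psi in * by ring.
    destruct (Rle_dec rho1 psi).
    + exists psi. split; auto. left. unfold Icc; lra.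
    + destruct (Rle_dec psi (- rho1)).
      * exists (psi + 2*PI). split. right; right; right. unfold Icc; lra. symmetry. apply xi_2pi.
      * exfalso. apply (not_Bd_small psi); auto. lra.
  - rewrite (xi_shift_eq psi 1 _) in HB by (simpl; ring). apply Bd_iter in HB.
    destruct (Rle_dec rho1 psi).
    + exists (psi + 1*(PI/2)). split; auto. right; left. unfold Icc; lra.
    + destruct (Rle_dec psi (- rho1)).
      * exists (psi + 1*(PI/2)). split; auto. left. unfold Icc; lra.
      * exfalso. apply (not_Bd_small psi); auto. lra.
  - rewrite (xi_shift_eq psi 2 _) in HB by (simpl; ring). apply Bd_iter in HB.
    destruct (Rle_dec rho1 psi).
    + exists (psi + 2*(PI/2)). split; auto. right; right; left. unfold Icc; lra.
    + destruct (Rle_dec psi (- rho1)).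
      * exists (psi + 2*(PI/2)). split; auto. right; left. unfold Icc; lra.
      * exfalso. apply (not_Bd_small psi); auto. lra.
  - rewrite (xi_shift_eq psi 3 _) in HB by (simpl; ring). apply Bd_iter in HB.
    destruct (Rle_dec rho1 psi).
    + exists (psi + 3*(PI/2)). split; auto. right; right; right. unfold Icc; lra.
    + destruct (Rle_dec psi (- rho1)).
      * exists (psi + 3*(PI/2)). split; auto. right; right; left. unfold Icc; lra.
      * exfalso. apply (not_Bd_small psi); auto. lra.
Qed.

Lemma Wulff_main X : Wulff_shape gamma6 X <-> xi_image S4 X.
Proof.
  split.
  - intro HW. destruct (touch X HW) as [p Hp]. pose proof (Bd_closed X HW) as HB.
    pose proof (tangency X p HB Hp) as E. subst X. apply reduce; auto.
  - apply Bd_xi_image.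
Qed.

Theorem proposition3p5 :
  (* (i) explicit formula (second component with the typo 6 c^4 s^2 corrected
         to 6 c^2 s^4, see NOTES.md) *)
  (forall th : R,
     xi th =
     (cos th * (cos th ^ 6 + 6 * cos th ^ 4 * sin th ^ 2 - 5 * sin th ^ 6),
      sin th * (- 5 * cos th ^ 6 + 6 * cos th ^ 2 * sin th ^ 4 + sin th ^ 6))) /\
  (* (ii) Wulff shape *)
  (forall X : pt,
     Wulff_shape gamma6 X <->
     xi_image (fun t => Icc rho1 rho2 t \/ Icc (rho1 + PI / 2) (rho2 + PI / 2) t \/
                        Icc (rho1 + PI) (rho2 + PI) t \/
                        Icc (rho1 + 3 * PI / 2) (rho2 + 3 * PI / 2) t) X) /\
  (* (iii) the four CAMC curves, curvature -1 w.r.t. the outward normal *)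
  (closed_pw_curve Cgamma1 /\ positively_oriented Cgamma1 /\ CAMC_with gamma6 Cgamma1 (-1) /\
   forall X, curve_image Cgamma1 X <->
     xi_image (fun t => Icc theta2 theta3 t \/ Icc theta4 theta5 t \/
                        Icc theta6 theta7 t \/ Icc theta8 theta1 t) X) /\
  (closed_pw_curve Cgamma2 /\ positively_oriented Cgamma2 /\ CAMC_with gamma6 Cgamma2 (-1) /\
   forall X, curve_image Cgamma2 X <->
     xi_image (fun t => Icc theta1 theta2 t \/ Icc theta5 theta6 t) X) /\
  (closed_pw_curve Cgamma3 /\ positively_oriented Cgamma3 /\ CAMC_with gamma6 Cgamma3 (-1) /\
   forall X, curve_image Cgamma3 X <->
     xi_image (fun t => Icc theta8 theta1 t \/ Icc theta3 (rho2 + PI / 2) t \/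
                        Icc (rho1 + PI) theta6 t) X) /\
  (closed_pw_curve Cgamma4 /\ positively_oriented Cgamma4 /\ CAMC_with gamma6 Cgamma4 (-1) /\
   forall X, curve_image Cgamma4 X <->
     xi_image (fun t => Icc theta1 rho1 t \/ Icc rho2 theta2 t \/
                        Icc theta3 (rho1 + PI / 2) t \/ Icc (rho2 + PI / 2) theta4 t \/
                        Icc theta5 (rho1 + PI) t \/ Icc (rho2 + PI) theta6 t \/
                        Icc theta7 (rho1 + 3 * PI / 2) t \/
                        Icc (rho2 + 3 * PI / 2) (theta8 + 2 * PI) t) X) /\
  (* (iv) Cgamma5 = xi([-rho1, rho1]) is a closed piecewise-smooth curve, not CAMC;
          arcs of Cgamma5: xi on [theta1,rho1], [theta8,theta1], [-rho1,theta8]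
          (traversed with decreasing theta, parameter t = -theta) *)
  (closed_pw_curve Cgamma5 /\ positively_oriented Cgamma5 /\ ~ CAMC gamma6 Cgamma5 /\
   (forall X, curve_image Cgamma5 X <-> xi_image (Icc (- rho1) rho1) X) /\
   (forall th, theta8 < th < theta1 ->
      aniso_curv gamma6 (fun t => xi (- t)) (- th) = -1) /\
   (forall th, (- rho1 < th < theta8 \/ theta1 < th < rho1) ->
      aniso_curv gamma6 (fun t => xi (- t)) (- th) = 1)).
Proof.
  split. { intro th. rewrite xi_XY. reflexivity. }
  split. { exact Wulff_main. }
  split. { destruct C1_main as [A [B C]]. split; [auto|split; [auto|split; [auto|]]]. apply img_C1. }
  split. { destruct C2_main as [A [B C]]. split; [auto|split; [auto|split; [auto|]]]. apply img_C2. }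
  split. { destruct C3_main as [A [B C]]. split; [auto|split; [auto|split; [auto|]]]. apply img_C3. }
  split. { destruct C4_main as [A [B C]]. split; [auto|split; [auto|split; [auto|]]]. apply img_C4. }
  split. apply C5_closed. split. apply C5_area. split. apply C5_notCAMC.
  split. apply img_C5. split. apply C5_curv_mid. apply C5_curv_side.
Qed.
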